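(* For $i=1,2$, let $F_i(x,t,u,p,q)$, $H_i(x,t,u)$ satisfy the regularity hypotheses (continuous, $1$-periodic in $x$, with $F_u,F_p,F_q,H_t,H_u,H_{tu},H_{uu}$ continuous), and let $u_i\in C^1$ be solutions of $u_i=I(a,b,F_i(u_i),H_i(u_i))$ on $[0,T]$ with the same initial data $a,b$ and $M_1(u_i,T)\le K$. Assume $H_1(x,0,u)=H_2(x,0,u)$, and on $S=S(T,K)$ $\max_S\{|(F_1)_u|,|(F_1)_p|,|(F_1)_q|,|(H_1)_u|,|(H_1)_{tu}|,|(H_1)_{uu}|\}\le K$, $\max_S\{|F_2-F_1|,|H_2-H_1|,|(H_2-H_1)_t|,|(H_2-H_1)_u|\}\le\varepsilon$. Then there is $C>0$ depending monotone increasingly only on $T$ and $K$ with $M_1(u_2-u_1,T)\le CT\varepsilon$.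
   Context: $I(a,b,f,h)(x,t)=\tfrac12\{a(x+t)+a(x-t)\}+\tfrac12\int_{x-t}^{x+t}b(y)dy+\tfrac12\int_0^t\int_{x-(t-\tau)}^{x+(t-\tau)}f(y,\tau)dyd\tau+\tfrac12\int_0^t\{h(x+(t-\tau),\tau)-h(x-(t-\tau),\tau)\}d\tau$; $F(u)(x,t)=F(x,t,u,u_x,u_t)$, $H(u)(x,t)=H(x,t,u(x,t))$. $S(T,r)=\{(x,t,u,p,q):0\le t\le T,|u|+|p|+|q|\le r\}$ (resp. $\{(x,t,u):0\le t\le T,|u|\le r\}$ for $H$). $M_1(u,T)=M_0(u,T)+M_0(u_x,T)+M_0(u_t,T)$, $M_0(u,T)=\sup_{0\le t\le T}\sup_x|u(x,t)|$. *)

(* Defs.v *)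
From Stdlib Require Import Reals ClassicalEpsilon.
Open Scope R_scope.

(* It is the unique v with RiemannInt pr = v for some integrability proof pr
   (RiemannInt is proof-irrelevant); only used on continuous integrands. *)
Definition RInt (f : R -> R) (a b : R) : R :=
  epsilon (inhabits 0) (fun v => exists pr : Riemann_integrable f a b, RiemannInt pr = v).

Definition Iop (a b : R -> R) (f h : R -> R -> R) (x t : R) : R :=
  / 2 * (a (x + t) + a (x - t))
  + / 2 * RInt b (x - t) (x + t)
  + / 2 * RInt (fun tau => RInt (fun y => f y tau) (x - (t - tau)) (x + (t - tau))) 0 t
  + / 2 * RInt (fun tau => h (x + (t - tau)) tau - h (x - (t - tau)) tau) 0 t.

Definition Fop (F : R -> R -> R -> R -> R -> R) (u ux ut : R -> R -> R) : R -> R -> R :=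
  fun x t => F x t (u x t) (ux x t) (ut x t).
Definition Hop (H : R -> R -> R -> R) (u : R -> R -> R) : R -> R -> R :=
  fun x t => H x t (u x t).

(* one-sided-aware derivative of f at t, relative to the set D *)
Definition deriv_within (D : R -> Prop) (f : R -> R) (t l : R) : Prop :=
  forall eps, 0 < eps -> exists delta, 0 < delta /\
    forall h, h <> 0 -> Rabs h < delta -> D (t + h) ->
      Rabs ((f (t + h) - f t) / h - l) < eps.

Definition inT (T : R) (t : R) : Prop := 0 <= t <= T.

Definition cont2 (T : R) (f : R -> R -> R) : Prop :=
  forall x t, inT T t -> forall eps, 0 < eps -> exists d, 0 < d /\
    forall x' t', inT T t' -> Rabs (x' - x) < d -> Rabs (t' - t) < d ->
      Rabs (f x' t' - f x t) < eps.

Definition cont3 (T : R) (f : R -> R -> R -> R) : Prop :=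
  forall x t u, inT T t -> forall eps, 0 < eps -> exists d, 0 < d /\
    forall x' t' u', inT T t' -> Rabs (x' - x) < d -> Rabs (t' - t) < d ->
      Rabs (u' - u) < d -> Rabs (f x' t' u' - f x t u) < eps.

Definition cont5 (T : R) (f : R -> R -> R -> R -> R -> R) : Prop :=
  forall x t u p q, inT T t -> forall eps, 0 < eps -> exists d, 0 < d /\
    forall x' t' u' p' q', inT T t' -> Rabs (x' - x) < d -> Rabs (t' - t) < d ->
      Rabs (u' - u) < d -> Rabs (p' - p) < d -> Rabs (q' - q) < d ->
      Rabs (f x' t' u' p' q' - f x t u p q) < eps.

Definition regF (T : R) (F Fu Fp Fq : R -> R -> R -> R -> R -> R) : Prop :=
  cont5 T F /\ cont5 T Fu /\ cont5 T Fp /\ cont5 T Fq /\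
  (forall x t u p q, inT T t -> F (x + 1) t u p q = F x t u p q) /\
  (forall x t u p q, inT T t ->
     derivable_pt_lim (fun v => F x t v p q) u (Fu x t u p q) /\
     derivable_pt_lim (fun v => F x t u v q) p (Fp x t u p q) /\
     derivable_pt_lim (fun v => F x t u p v) q (Fq x t u p q)).

Definition regH (T : R) (H Ht Hu Htu Huu : R -> R -> R -> R) : Prop :=
  cont3 T H /\ cont3 T Ht /\ cont3 T Hu /\ cont3 T Htu /\ cont3 T Huu /\
  (forall x t u, inT T t -> H (x + 1) t u = H x t u) /\
  (forall x t u, inT T t ->
     deriv_within (inT T) (fun s => H x s u) t (Ht x t u) /\
     derivable_pt_lim (fun v => H x t v) u (Hu x t u) /\
     derivable_pt_lim (fun v => Ht x t v) u (Htu x t u) /\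
     derivable_pt_lim (fun v => Hu x t v) u (Huu x t u)).

Definition isC1 (T : R) (u ux ut : R -> R -> R) : Prop :=
  cont2 T u /\ cont2 T ux /\ cont2 T ut /\
  (forall x t, inT T t ->
     derivable_pt_lim (fun y => u y t) x (ux x t) /\
     deriv_within (inT T) (fun s => u x s) t (ut x t)).

Definition bnd (T : R) (f : R -> R -> R) : Prop :=
  exists B, forall x t, inT T t -> Rabs (f x t) <= B.

Definition M0 (f : R -> R -> R) (T : R) : R :=
  epsilon (inhabits 0)
    (is_lub (fun r => exists x t, inT T t /\ r = Rabs (f x t))).

Definition M1 (u ux ut : R -> R -> R) (T : R) : R := M0 u T + M0 ux T + M0 ut T.

(* "M_1(u,T) <= K" in the sense of the supremum (finite and <= K). *)
Definition M1_le (u ux ut : R -> R -> R) (T K : R) : Prop :=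
  bnd T u /\ bnd T ux /\ bnd T ut /\ M1 u ux ut T <= K.

Definition diff2 (f g : R -> R -> R) : R -> R -> R := fun x t => f x t - g x t.

Definition inS5 (T r x t u p q : R) : Prop := inT T t /\ Rabs u + Rabs p + Rabs q <= r.
Definition inS3 (T r x t u : R) : Prop := inT T t /\ Rabs u <= r.

(* Main.v *)
From Pilot Require Import Defs.
From Stdlib Require Import Reals Lra ClassicalEpsilon Classical.
From Coquelicot Require Import Coquelicot.
Open Scope R_scope.

Notation DR := Pilot.Defs.RInt.
Notation CI := Coquelicot.RInt.RInt.
Section SecA.
Implicit Types (f g psi : R -> R).

Lemma DR_eq f a b : ex_RInt f a b -> DR f a b = CI f a b.
Proof.
  intros H. pose proof (ex_RInt_Reals_0 _ _ _ H) as pr.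
  unfold Pilot.Defs.RInt.
  destruct (epsilon_spec (inhabits 0) (fun v => exists pr : Riemann_integrable f a b, RiemannInt pr = v)) as [pr' E].
  - exists (RiemannInt pr). exists pr. reflexivity.
  - rewrite <- E. symmetry. apply RInt_Reals.
Qed.

Lemma cont_ed f x :
  (forall e, 0 < e -> exists d, 0 < d /\ forall y, Rabs (y - x) < d -> Rabs (f y - f x) < e) ->
  continuity_pt f x.
Proof.
  intros H. unfold continuity_pt, continue_in, limit1_in, limit_in. simpl.
  intros e He. destruct (H e He) as [d [Hd Hy]]. exists d. split; [lra|].
  intros y [_ Hy2]. unfold R_dist in *. apply Hy. exact Hy2.
Qed.

Lemma cont_ed' f x :
  (forall e, 0 < e -> exists d, 0 < d /\ forall y, Rabs (y - x) < d -> Rabs (f y - f x) < e) ->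
  continuous f x.
Proof. intros H. apply continuity_pt_filterlim. apply cont_ed. exact H. Qed.

Lemma cont_ed_inv f x : continuity_pt f x ->
  forall e, 0 < e -> exists d, 0 < d /\ forall y, Rabs (y - x) < d -> Rabs (f y - f x) < e.
Proof.
  intros H e He. unfold continuity_pt, continue_in, limit1_in, limit_in in H. simpl in H.
  destruct (H e He) as [d [Hd Hy]]. exists d. split; [lra|].
  intros y Hyx. destruct (Req_dec y x) as [->|Hne].
  - unfold Rminus. rewrite Rplus_opp_r, Rabs_R0. lra.
  - apply Hy. split. split; [exact I|auto]. exact Hyx.
Qed.

Definition contOn (a b : R) (g : R -> R) : Prop :=
  forall z, a <= z <= b -> forall e, 0 < e -> exists d, 0 < d /\
    forall z', a <= z' <= b -> Rabs (z' - z) < d -> Rabs (g z' - g z) < e.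

Definition clamp (a b z : R) := Rmax a (Rmin b z).

Lemma clamp_in a b z : a <= b -> a <= clamp a b z <= b.
Proof. intros. unfold clamp, Rmax, Rmin. repeat destruct Rle_dec; lra. Qed.

Lemma clamp_id a b z : a <= z <= b -> clamp a b z = z.
Proof. intros. unfold clamp, Rmax, Rmin. repeat destruct Rle_dec; lra. Qed.

Lemma clamp_lip a b z z' : a <= b -> Rabs (clamp a b z' - clamp a b z) <= Rabs (z' - z).
Proof.
  intros. unfold clamp, Rmax, Rmin. repeat destruct Rle_dec;
  unfold Rabs; repeat destruct Rcase_abs; lra.
Qed.

Lemma contOn_clamp a b g : a <= b -> contOn a b g -> forall z, continuity_pt (fun z => g (clamp a b z)) z.
Proof.
  intros Hab Hc z. apply cont_ed. intros e He.
  destruct (Hc (clamp a b z) (clamp_in a b z Hab) e He) as [d [Hd Hy]].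
  exists d. split; auto. intros y Hyz. apply Hy. apply clamp_in; auto.
  eapply Rle_lt_trans. apply clamp_lip; auto. auto.
Qed.

Lemma contOn_ex_RInt a b g : a <= b -> contOn a b g -> ex_RInt g a b.
Proof.
  intros Hab Hc.
  apply ex_RInt_ext with (f := fun z => g (clamp a b z)).
  - intros x Hx. rewrite Rmin_left in Hx by lra. rewrite Rmax_right in Hx by lra.
    rewrite clamp_id; auto; lra.
  - apply (ex_RInt_continuous (V:=R_CompleteNormedModule)). intros z _. apply continuity_pt_filterlim.
    apply contOn_clamp; auto.
Qed.

Lemma contOn_sub a b g : a <= b -> contOn a b g -> forall a' b', a <= a' -> b' <= b -> contOn a' b' g.
Proof.
  intros Hab Hc a' b' H1 H2 z Hz e He. destruct (Hc z ltac:(lra) e He) as [d [Hd Hy]].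
  exists d. split; auto. intros z' Hz'. apply Hy. lra.
Qed.

Lemma contOn_plus a b f g : contOn a b f -> contOn a b g -> contOn a b (fun z => f z + g z).
Proof.
  intros Hf Hg z Hz e He.
  destruct (Hf z Hz (e/2) ltac:(lra)) as [d1 [Hd1 H1]].
  destruct (Hg z Hz (e/2) ltac:(lra)) as [d2 [Hd2 H2]].
  exists (Rmin d1 d2). split. apply Rmin_pos; auto.
  intros z' Hz' Hzz. pose proof (Rmin_l d1 d2). pose proof (Rmin_r d1 d2).
  specialize (H1 z' Hz' ltac:(lra)). specialize (H2 z' Hz' ltac:(lra)).
  replace (f z' + g z' - (f z + g z)) with ((f z' - f z) + (g z' - g z)) by ring.
  eapply Rle_lt_trans. apply Rabs_triang. lra.
Qed.

Lemma contOn_scal a b c f : contOn a b f -> contOn a b (fun z => c * f z).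
Proof.
  intros Hf z Hz e He.
  destruct (Hf z Hz (e/(Rabs c + 1))) as [d [Hd H1]].
  { apply Rdiv_lt_0_compat; auto. pose proof (Rabs_pos c); lra. }
  exists d. split; auto. intros z' Hz' Hzz. specialize (H1 z' Hz' Hzz).
  replace (c * f z' - c * f z) with (c * (f z' - f z)) by ring.
  rewrite Rabs_mult. pose proof (Rabs_pos c).
  apply Rle_lt_trans with ((Rabs c + 1) * Rabs (f z' - f z)).
  { apply Rmult_le_compat_r. apply Rabs_pos. lra. }
  apply Rmult_lt_reg_r with (/ (Rabs c + 1)). apply Rinv_0_lt_compat; lra.
  replace ((Rabs c + 1) * Rabs (f z' - f z) * / (Rabs c + 1)) with (Rabs (f z' - f z)) by (field; lra).
  exact H1.
Qed.

Lemma CI_minus f g a b : ex_RInt f a b -> ex_RInt g a b ->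
  CI (fun x => f x - g x) a b = CI f a b - CI g a b.
Proof. intros Hf Hg. exact (RInt_minus (V:=R_CompleteNormedModule) f g a b Hf Hg). Qed.

Lemma CI_plus f g a b : ex_RInt f a b -> ex_RInt g a b ->
  CI (fun x => f x + g x) a b = CI f a b + CI g a b.
Proof. intros Hf Hg. exact (RInt_plus (V:=R_CompleteNormedModule) f g a b Hf Hg). Qed.

Lemma CI_opp f a b : ex_RInt f a b -> CI (fun x => - f x) a b = - CI f a b.
Proof. intros Hf. exact (RInt_opp (V:=R_CompleteNormedModule) f a b Hf). Qed.

Lemma CI_scal f a b c : ex_RInt f a b -> CI (fun x => c * f x) a b = c * CI f a b.
Proof. intros Hf. exact (RInt_scal (V:=R_CompleteNormedModule) f a b c Hf). Qed.

Lemma CI_Chasles f a b c : ex_RInt f a b -> ex_RInt f b c -> CI f a b + CI f b c = CI f a c.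
Proof. intros H1 H2. exact (RInt_Chasles (V:=R_CompleteNormedModule) f a b c H1 H2). Qed.

Lemma CI_swap f a b : ex_RInt f a b -> CI f b a = - CI f a b.
Proof. intros H. symmetry. exact (opp_RInt_swap (V:=R_CompleteNormedModule) f a b H). Qed.

Lemma CI_point f a : CI f a a = 0.
Proof. exact (RInt_point (V:=R_CompleteNormedModule) a f). Qed.

Lemma exR_minus f g a b : ex_RInt f a b -> ex_RInt g a b -> ex_RInt (fun x => f x - g x) a b.
Proof. intros. exact (ex_RInt_minus (V:=R_NormedModule) f g a b H H0). Qed.
Lemma exR_plus f g a b : ex_RInt f a b -> ex_RInt g a b -> ex_RInt (fun x => f x + g x) a b.
Proof. intros. exact (ex_RInt_plus (V:=R_NormedModule) f g a b H H0). Qed.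
Lemma exR_scal f a b c : ex_RInt f a b -> ex_RInt (fun x => c * f x) a b.
Proof. intros. exact (ex_RInt_scal (V:=R_NormedModule) f a b c H). Qed.
Lemma exR_swap f a b : ex_RInt f a b -> ex_RInt f b a.
Proof. intros. exact (ex_RInt_swap (V:=R_NormedModule) f a b H). Qed.
Lemma exR_Chasles f a b c : ex_RInt f a b -> ex_RInt f b c -> ex_RInt f a c.
Proof. intros. exact (ex_RInt_Chasles (V:=R_NormedModule) f a b c H H0). Qed.

Lemma exR_cont f a b : (forall z, continuity_pt f z) -> ex_RInt f a b.
Proof.
  intros H. apply (ex_RInt_continuous (V:=R_CompleteNormedModule)). intros z _.
  apply continuity_pt_filterlim. apply H.
Qed.

Lemma CI_abs_const f a b M : ex_RInt f a b ->
  (forall t, Rmin a b <= t <= Rmax a b -> Rabs (f t) <= M) ->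
  Rabs (CI f a b) <= Rabs (b - a) * M.
Proof.
  intros Hf HM. destruct (Rle_dec a b) as [Hab|Hab].
  - rewrite (Rabs_right (b - a)) by lra. apply abs_RInt_le_const; auto.
    intros t Ht. apply HM. rewrite Rmin_left, Rmax_right; lra.
  - rewrite <- (Ropp_involutive (CI f a b)). rewrite <- CI_swap by auto.
    rewrite Rabs_Ropp. rewrite (Rabs_left (b - a)) by lra.
    replace (- (b - a)) with (a - b) by ring.
    apply abs_RInt_le_const; [lra| apply exR_swap; auto|].
    intros t Ht. apply HM. rewrite Rmin_right, Rmax_left; lra.
Qed.

Lemma CI_bound g psi a b : a <= b -> ex_RInt g a b -> ex_RInt psi a b ->
  (forall t, a <= t <= b -> Rabs (g t) <= psi t) -> Rabs (CI g a b) <= CI psi a b.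
Proof.
  intros Hab Hg Hp H. apply Rabs_le. split.
  - rewrite <- (Ropp_involutive (CI g a b)). apply Ropp_le_contravar.
    rewrite <- CI_opp by auto. apply RInt_le; auto. apply (ex_RInt_opp (V:=R_NormedModule)); auto.
    intros x Hx. specialize (H x ltac:(lra)). apply Rabs_le_between in H. lra.
  - apply RInt_le; auto. intros x Hx. specialize (H x ltac:(lra)). apply Rabs_le_between in H. lra.
Qed.

Lemma CI_exp A B l p c s0 s1 : l <> 0 -> p <> 0 ->
  CI (fun y => A + B * exp (l * (p * y + c))) s0 s1 =
  A * (s1 - s0) + B / (l * p) * (exp (l * (p * s1 + c)) - exp (l * (p * s0 + c))).
Proof.
  intros Hl Hp.
  apply (is_RInt_unique (V:=R_CompleteNormedModule)).
  replace (A * (s1 - s0) + B / (l * p) * (exp (l * (p * s1 + c)) - exp (l * (p * s0 + c))))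
    with (minus ((fun y => A * y + B / (l * p) * exp (l * (p * y + c))) s1)
                ((fun y => A * y + B / (l * p) * exp (l * (p * y + c))) s0)).
  2:{ unfold minus, plus, opp. simpl. field. split; auto. }
  apply (is_RInt_derive (V:=R_CompleteNormedModule) (fun y => A * y + B / (l * p) * exp (l * (p * y + c)))).
  - intros x _. auto_derive. auto. field. split; auto.
  - intros x _. apply continuity_pt_filterlim. apply cont_ed.
    intros e He.
    assert (Hc : continuity_pt (fun y => A + B * exp (l * (p * y + c))) x).
    { apply continuity_pt_plus. apply continuity_pt_const. intros ? ?; reflexivity.
      apply continuity_pt_scal. apply continuity_pt_comp with (f1 := fun y => l * (p*y+c)).
      apply derivable_continuous_pt. apply derivable_pt_scal. apply derivable_pt_plus.
      apply derivable_pt_scal. apply derivable_pt_id. apply derivable_pt_const.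
      apply derivable_continuous_pt. apply derivable_pt_exp. }
    exact (cont_ed_inv _ _ Hc e He).
Qed.

End SecA.

Section SecB.
Implicit Types (f g : R -> R).

Lemma dpl_cont g v l : derivable_pt_lim g v l -> continuity_pt g v.
Proof. intros H. apply (derivable_continuous_pt g v (exist _ l H)). Qed.

Lemma lip1 g gp a b L :
  (forall v, Rmin a b <= v <= Rmax a b -> derivable_pt_lim g v (gp v)) ->
  (forall v, Rmin a b <= v <= Rmax a b -> Rabs (gp v) <= L) ->
  Rabs (g b - g a) <= L * Rabs (b - a).
Proof.
  intros Hd HL. destruct (MVT_gen g a b gp) as [c [Hc E]].
  - intros x Hx. apply is_derive_Reals. apply Hd. lra.
  - intros x Hx. apply (dpl_cont _ _ (gp x)). apply Hd. lra.
  - rewrite E. rewrite Rabs_mult. apply Rmult_le_compat_r. apply Rabs_pos. apply HL. lra.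
Qed.

Lemma dw_contOn T g gp a b : 0 <= a -> b <= T ->
  (forall s, a <= s <= b -> deriv_within (inT T) g s (gp s)) -> contOn a b g.
Proof.
  intros Ha Hb Hd z Hz e He.
  destruct (Hd z Hz 1 ltac:(lra)) as [d [Hd0 Hq]].
  exists (Rmin d (e / (Rabs (gp z) + 2))). split.
  { apply Rmin_pos; auto. apply Rdiv_lt_0_compat; auto. pose proof (Rabs_pos (gp z)); lra. }
  intros z' Hz' Hzz. pose proof (Rmin_l d (e / (Rabs (gp z) + 2))) as M1.
  pose proof (Rmin_r d (e / (Rabs (gp z) + 2))) as M2.
  destruct (Req_dec z' z) as [->|Hne].
  { unfold Rminus. rewrite Rplus_opp_r, Rabs_R0. lra. }
  specialize (Hq (z' - z) ltac:(lra) ltac:(lra)).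
  replace (z + (z' - z)) with z' in Hq by ring.
  specialize (Hq ltac:(unfold inT; lra)).
  set (q := (g z' - g z) / (z' - z)) in Hq.
  assert (E : g z' - g z = q * (z' - z)) by (unfold q; field; lra).
  rewrite E, Rabs_mult.
  assert (Hqb : Rabs q <= Rabs (gp z) + 2).
  { pose proof (Rabs_triang_inv q (gp z)). lra. }
  pose proof (Rabs_pos (gp z)). pose proof (Rabs_pos (z' - z)).
  apply Rle_lt_trans with ((Rabs (gp z) + 2) * Rabs (z' - z)).
  { apply Rmult_le_compat_r; auto. }
  apply Rmult_lt_reg_r with (/ (Rabs (gp z) + 2)). apply Rinv_0_lt_compat; lra.
  replace ((Rabs (gp z) + 2) * Rabs (z' - z) * / (Rabs (gp z) + 2)) with (Rabs (z' - z)) by (field; lra).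
  replace (e * / (Rabs (gp z) + 2)) with (e / (Rabs (gp z) + 2)) by (unfold Rdiv; ring). lra.
Qed.

Lemma dw_dec T g gp a b : 0 <= a -> a <= b -> b <= T ->
  (forall s, a <= s <= b -> deriv_within (inT T) g s (gp s)) ->
  (forall s, a <= s <= b -> gp s <= 0) -> g b <= g a.
Proof.
  intros Ha Hab Hb Hd Hn.
  destruct (Req_dec a b) as [->|Hne]. lra.
  pose proof (dw_contOn T g gp a b Ha Hb Hd) as Hc.
  destruct (MVT_gen (fun z => g (clamp a b z)) a b gp) as [c [Hcr E]].
  - intros x Hx. rewrite Rmin_left, Rmax_right in Hx by lra.
    apply is_derive_Reals. intros e He.
    destruct (Hd x ltac:(lra) e He) as [d [Hd0 Hq]].
    assert (Hp : 0 < Rmin d (Rmin (x - a) (b - x))).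
    { apply Rmin_pos; auto. apply Rmin_pos; lra. }
    exists (mkposreal _ Hp). simpl. intros h Hh Hhl.
    pose proof (Rmin_l d (Rmin (x - a) (b - x))).
    pose proof (Rmin_r d (Rmin (x - a) (b - x))).
    pose proof (Rmin_l (x - a) (b - x)). pose proof (Rmin_r (x - a) (b - x)).
    apply Rabs_def2 in Hhl as [Hh1 Hh2].
    rewrite (clamp_id a b (x + h)) by lra. rewrite (clamp_id a b x) by lra.
    apply Hq; auto. apply Rabs_def1; lra. unfold inT; lra.
  - intros x _. apply contOn_clamp; auto.
  - rewrite Rmin_left, Rmax_right in Hcr by lra.
    rewrite (clamp_id a b b), (clamp_id a b a) in E by lra.
    specialize (Hn c Hcr). assert (gp c * (b - a) <= 0).
    { apply Rmult_le_0_r; lra. } lra.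
Qed.

Lemma dw_minus D g1 g2 t l1 l2 : deriv_within D g1 t l1 -> deriv_within D g2 t l2 ->
  deriv_within D (fun s => g1 s - g2 s) t (l1 - l2).
Proof.
  intros H1 H2 e He. destruct (H1 (e/2) ltac:(lra)) as [d1 [Hd1 Q1]].
  destruct (H2 (e/2) ltac:(lra)) as [d2 [Hd2 Q2]].
  exists (Rmin d1 d2). split. apply Rmin_pos; auto.
  intros h Hh Hhl HD. pose proof (Rmin_l d1 d2). pose proof (Rmin_r d1 d2).
  specialize (Q1 h Hh ltac:(lra) HD). specialize (Q2 h Hh ltac:(lra) HD).
  replace ((g1 (t + h) - g2 (t + h) - (g1 t - g2 t)) / h - (l1 - l2))
    with (((g1 (t + h) - g1 t) / h - l1) - ((g2 (t + h) - g2 t) / h - l2)) by (field; auto).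
  eapply Rle_lt_trans. apply Rabs_triang. rewrite Rabs_Ropp. lra.
Qed.

Lemma dw_opp D g t l : deriv_within D g t l -> deriv_within D (fun s => - g s) t (- l).
Proof.
  intros H e He. destruct (H e He) as [d [Hd Q]]. exists d. split; auto.
  intros h Hh Hhl HD. specialize (Q h Hh Hhl HD).
  replace ((- g (t + h) - - g t) / h - - l) with (- ((g (t + h) - g t) / h - l)) by (field; auto).
  rewrite Rabs_Ropp. auto.
Qed.

Lemma dw_dpl D g t l : derivable_pt_lim g t l -> deriv_within D g t l.
Proof.
  intros H e He. destruct (H e He) as [d Q]. exists d. split. apply cond_pos.
  intros h Hh Hhl _. apply Q; auto.
Qed.

Lemma mvt_within T g gp kp kpp a b : 0 <= a -> a <= b -> b <= T ->
  (forall s, a <= s <= b -> deriv_within (inT T) g s (gp s)) ->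
  (forall s, derivable_pt_lim kp s (kpp s)) ->
  (forall s, a <= s <= b -> Rabs (gp s) <= kpp s) ->
  Rabs (g b - g a) <= kp b - kp a.
Proof.
  intros Ha Hab Hb Hd Hk Hbd. apply Rabs_le. split.
  - assert (H := dw_dec T (fun s => - g s - kp s) (fun s => - gp s - kpp s) a b Ha Hab Hb).
    cut (- g b - kp b <= - g a - kp a). lra.
    apply H. intros s Hs. apply dw_minus. apply dw_opp. auto. apply dw_dpl. auto.
    intros s Hs. specialize (Hbd s Hs). apply Rabs_le_between in Hbd. lra.
  - assert (H := dw_dec T (fun s => g s - kp s) (fun s => gp s - kpp s) a b Ha Hab Hb).
    cut (g b - kp b <= g a - kp a). lra.
    apply H. intros s Hs. apply dw_minus. auto. apply dw_dpl. auto.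
    intros s Hs. specialize (Hbd s Hs). apply Rabs_le_between in Hbd. lra.
Qed.

Lemma limA phi x D gb :
  derivable_pt_lim phi x D ->
  (exists d0, 0 < d0 /\ forall eta, 0 < eta < d0 -> Rabs (phi (x + eta) - phi x) <= eta * gb eta) ->
  continuity_pt gb 0 -> Rabs D <= gb 0.
Proof.
  intros Hd [d0 [Hd0 Hb]] Hc. apply Rnot_lt_le. intros Hlt.
  set (e := (Rabs D - gb 0) / 2).
  assert (He : 0 < e) by (unfold e; lra).
  destruct (cont_ed_inv _ _ Hc e He) as [d1 [Hd1 C1]].
  destruct (Hd e He) as [d2 Q].
  pose (m := Rmin d0 (Rmin d1 d2) / 2).
  pose proof (Rmin_l d0 (Rmin d1 d2)). pose proof (Rmin_r d0 (Rmin d1 d2)).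
  pose proof (Rmin_l d1 d2). pose proof (Rmin_r d1 d2). pose proof (cond_pos d2).
  assert (Hm : 0 < m). { unfold m. assert (0 < Rmin d0 (Rmin d1 d2)). apply Rmin_pos; auto. apply Rmin_pos; auto. lra. }
  assert (Hm0 : m < d0) by (unfold m; lra).
  specialize (Hb m ltac:(lra)).
  assert (Hmd2 : m < d2) by (unfold m in *; lra).
  specialize (Q m (Rgt_not_eq _ _ Hm) ltac:(rewrite Rabs_right; lra)).
  assert (Hmd1 : m < d1) by (unfold m in *; lra).
  specialize (C1 m ltac:(rewrite Rminus_0_r, Rabs_right; lra)).
  apply Rabs_def2 in C1.
  assert (Hq : Rabs ((phi (x + m) - phi x) / m) <= gb m).
  { unfold Rdiv. rewrite Rabs_mult. rewrite Rabs_inv. rewrite (Rabs_right m) by lra.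
    apply Rmult_le_reg_r with m; auto. rewrite Rmult_assoc, Rinv_l by lra. lra. }
  pose proof (Rabs_triang_inv D ((phi (x + m) - phi x) / m)).
  rewrite <- Rabs_Ropp in Q. replace (- ((phi (x + m) - phi x) / m - D)) with (D - (phi (x + m) - phi x) / m) in Q by ring.
  unfold e in *. lra.
Qed.

Lemma limB T phi t D gb : 0 < T -> inT T t ->
  deriv_within (inT T) phi t D ->
  (exists d0, 0 < d0 /\ forall del, del <> 0 -> Rabs del < d0 -> inT T (t + del) ->
      Rabs (phi (t + del) - phi t) <= Rabs del * gb (Rabs del)) ->
  continuity_pt gb 0 -> Rabs D <= gb 0.
Proof.
  intros HT Ht Hd [d0 [Hd0 Hb]] Hc. apply Rnot_lt_le. intros Hlt.
  set (e := (Rabs D - gb 0) / 2).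
  assert (He : 0 < e) by (unfold e; lra).
  destruct (cont_ed_inv _ _ Hc e He) as [d1 [Hd1 C1]].
  destruct (Hd e He) as [d2 [Hd2 Q]].
  pose (m := Rmin (Rmin d0 T) (Rmin d1 d2) / 2).
  pose proof (Rmin_l (Rmin d0 T) (Rmin d1 d2)). pose proof (Rmin_r (Rmin d0 T) (Rmin d1 d2)).
  pose proof (Rmin_l d1 d2). pose proof (Rmin_r d1 d2).
  pose proof (Rmin_l d0 T). pose proof (Rmin_r d0 T).
  assert (Hm : 0 < m).
  { unfold m. assert (0 < Rmin (Rmin d0 T) (Rmin d1 d2)). apply Rmin_pos; apply Rmin_pos; auto. lra. }
  unfold inT in Ht.
  assert (exists del, Rabs del = m /\ inT T (t + del)) as [del [Hdm Hdin]].
  { destruct (Rle_dec (t + m) T).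
    - exists m. split. apply Rabs_right; lra. unfold inT; lra.
    - exists (- m). split. rewrite Rabs_Ropp. apply Rabs_right; lra. unfold inT. unfold m in *. lra. }
  assert (Hdel : del <> 0). { intros ->. rewrite Rabs_R0 in Hdm. lra. }
  specialize (Hb del Hdel ltac:(unfold m in *; lra) Hdin).
  specialize (Q del Hdel ltac:(unfold m in *; lra) Hdin).
  specialize (C1 m ltac:(rewrite Rminus_0_r, Rabs_right; unfold m in *; lra)).
  apply Rabs_def2 in C1. rewrite Hdm in Hb.
  assert (Hq : Rabs ((phi (t + del) - phi t) / del) <= gb m).
  { unfold Rdiv. rewrite Rabs_mult. rewrite Rabs_inv. rewrite Hdm.
    apply Rmult_le_reg_r with m; auto. rewrite Rmult_assoc, Rinv_l by lra. lra. }
  pose proof (Rabs_triang_inv D ((phi (t + del) - phi t) / del)).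
  rewrite <- Rabs_Ropp in Q. replace (- ((phi (t + del) - phi t) / del - D)) with (D - (phi (t + del) - phi t) / del) in Q by ring.
  unfold e in *. lra.
Qed.

End SecB.

Lemma UC T (f : R -> R -> R) a b t0 : cont2 T f -> inT T t0 -> a <= b ->
  forall e, 0 < e -> exists d, 0 < d /\ forall y t, a <= y <= b -> inT T t ->
    Rabs (t - t0) < d -> Rabs (f y t - f y t0) < e.
Proof.
  intros Hc Ht0 Hab e He.
  assert (Sub : forall z, exists d1, 0 < d1 /\ forall y t, Rabs (y - z) < d1 -> inT T t ->
             Rabs (t - t0) < d1 -> Rabs (f y t - f y t0) < e).
  { intros z. destruct (Hc z t0 Ht0 (e/2) ltac:(lra)) as [d1 [Hd1 Q]].
    exists d1. split; auto. intros y t Hy Ht Htt.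
    pose proof (Q y t Ht Hy Htt). pose proof (Q y t0 Ht0 Hy ltac:(rewrite Rminus_diag, Rabs_R0; lra)).
    replace (f y t - f y t0) with ((f y t - f z t0) - (f y t0 - f z t0)) by ring.
    eapply Rle_lt_trans. apply Rabs_triang. rewrite Rabs_Ropp. lra. }
  set (E := fun s => a <= s <= b /\ exists d, 0 < d /\ forall y t, a <= y <= s -> inT T t ->
             Rabs (t - t0) < d -> Rabs (f y t - f y t0) < e).
  assert (Ea : E a).
  { split. lra. destruct (Sub a) as [d1 [Hd1 Q]]. exists d1. split; auto.
    intros y t Hy Ht Htt. apply Q; auto. replace (y - a) with 0 by lra. rewrite Rabs_R0. lra. }
  assert (Hbd : bound E). { exists b. intros s [Hs _]. lra. }
  destruct (completeness E Hbd (ex_intro _ a Ea)) as [s Hs].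
  destruct Hs as [Hub Hlub].
  assert (Has : a <= s) by (apply Hub; auto).
  assert (Hsb : s <= b) by (apply Hlub; intros z [Hz _]; lra).
  destruct (Sub s) as [d1 [Hd1 Q1]].
  assert (Hex : exists s1, E s1 /\ s - d1 < s1).
  { apply NNPP. intros Hn. assert (s <= s - d1). apply Hlub. intros z Hz.
    apply Rnot_lt_le. intros Hlt. apply Hn. exists z. auto. lra. }
  destruct Hex as [s1 [[Hs1 [ds [Hds Qs]]] Hs1d]].
  set (s' := Rmin b (s + d1 / 2)).
  assert (Es' : E s').
  { split. unfold s'. unfold Rmin. destruct Rle_dec; lra.
    exists (Rmin ds d1). split. apply Rmin_pos; auto.
    intros y t Hy Ht Htt. pose proof (Rmin_l ds d1). pose proof (Rmin_r ds d1).
    destruct (Rle_dec y s1).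
    - apply Qs; auto. lra. lra.
    - apply Q1; auto. assert (s' <= s + d1/2) by (unfold s'; apply Rmin_r).
      apply Rabs_def1; lra. lra. }
  assert (s' <= s) by (apply Hub; auto).
  assert (Hs'b : s' = b).
  { unfold s' in *. unfold Rmin in *. destruct Rle_dec; lra. }
  rewrite Hs'b in Es'. destruct Es' as [_ [d [Hd Qd]]]. exists d. split; auto.
Qed.

Lemma chain T (Hx Htx Hux : R -> R -> R) (u ut : R -> R) tau :
  inT T tau ->
  (forall v, deriv_within (inT T) (fun s => Hx s v) tau (Htx tau v)) ->
  (forall s v, inT T s -> derivable_pt_lim (fun w => Hx s w) v (Hux s v)) ->
  (forall e, 0 < e -> exists d, 0 < d /\ forall s v, inT T s -> Rabs (s - tau) < d ->
      Rabs (v - u tau) < d -> Rabs (Hux s v - Hux tau (u tau)) < e) ->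
  deriv_within (inT T) u tau (ut tau) ->
  deriv_within (inT T) (fun s => Hx s (u s)) tau (Htx tau (u tau) + Hux tau (u tau) * ut tau).
Proof.
  intros Htau HH HD HC Hu eps Heps.
  set (U := u tau). set (Lu := Hux tau U). set (Q := Rabs (ut tau) + 1).
  assert (HQ : 0 < Q) by (unfold Q; pose proof (Rabs_pos (ut tau)); lra).
  pose proof (Rabs_pos Lu) as HLu.
  destruct (Hu 1 ltac:(lra)) as [d1 [Hd1 Q1]].
  destruct (HC (eps / 3 / Q)) as [d2 [Hd2 Q2]]. { apply Rdiv_lt_0_compat; lra. }
  destruct (Hu (eps / 3 / (Rabs Lu + 1))) as [d3 [Hd3 Q3]]. { apply Rdiv_lt_0_compat; lra. }
  destruct (HH U (eps / 3) ltac:(lra)) as [d4 [Hd4 Q4]].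
  set (dd := Rmin (Rmin d1 d2) (Rmin (d2 / Q) (Rmin d3 d4))).
  assert (Hdd : 0 < dd).
  { unfold dd. repeat apply Rmin_pos; auto. apply Rdiv_lt_0_compat; lra. }
  exists dd. split; auto. intros h Hh Hhl Hin.
  assert (M1 : Rabs h < d1) by (unfold dd in Hhl; repeat (apply Rmin_def in Hhl || idtac);
     eapply Rlt_le_trans; [exact Hhl|]; eapply Rle_trans; apply Rmin_l).
  assert (M2 : Rabs h < d2) by (eapply Rlt_le_trans; [exact Hhl|]; unfold dd; eapply Rle_trans; [apply Rmin_l|apply Rmin_r]).
  assert (M2' : Rabs h < d2 / Q) by (eapply Rlt_le_trans; [exact Hhl|]; unfold dd; eapply Rle_trans; [apply Rmin_r|apply Rmin_l]).
  assert (M3 : Rabs h < d3) by (eapply Rlt_le_trans; [exact Hhl|]; unfold dd; eapply Rle_trans; [apply Rmin_r|]; eapply Rle_trans; [apply Rmin_r|apply Rmin_l]).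
  assert (M4 : Rabs h < d4) by (eapply Rlt_le_trans; [exact Hhl|]; unfold dd; eapply Rle_trans; [apply Rmin_r|]; eapply Rle_trans; [apply Rmin_r|apply Rmin_r]).
  set (q := (u (tau + h) - U) / h).
  assert (Eq : u (tau + h) - U = q * h) by (unfold q; field; auto).
  assert (Hq1 : Rabs (q - ut tau) < 1) by (apply Q1; auto).
  assert (Hq3 : Rabs (q - ut tau) < eps / 3 / (Rabs Lu + 1)) by (apply Q3; auto).
  assert (HqQ : Rabs q <= Q).
  { pose proof (Rabs_triang_inv q (ut tau)). unfold Q. lra. }
  assert (Hdu : Rabs (u (tau + h) - U) < d2).
  { rewrite Eq, Rabs_mult. pose proof (Rabs_pos h). pose proof (Rabs_pos q).
    apply Rle_lt_trans with (Q * Rabs h). apply Rmult_le_compat_r; auto.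
    apply Rmult_lt_reg_r with (/ Q). apply Rinv_0_lt_compat; auto.
    replace (Q * Rabs h * / Q) with (Rabs h) by (field; lra).
    replace (d2 * / Q) with (d2 / Q) by (unfold Rdiv; ring). auto. }
  destruct (MVT_gen (fun w => Hx (tau + h) w) U (u (tau + h)) (fun w => Hux (tau + h) w)) as [c [Hc Ec]].
  { intros x Hx'. apply is_derive_Reals. apply HD; auto. }
  { intros x Hx'. apply (dpl_cont _ _ (Hux (tau + h) x)). apply HD; auto. }
  simpl in Ec.
  assert (Hcu : Rabs (c - U) < d2).
  { revert Hc Hdu. unfold Rmin, Rmax. destruct Rle_dec; unfold Rabs; repeat destruct Rcase_abs; lra. }
  assert (HC2 : Rabs (Hux (tau + h) c - Lu) < eps / 3 / Q).
  { apply Q2; auto. replace (tau + h - tau) with h by ring. auto. }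
  assert (H4 : Rabs ((Hx (tau + h) U - Hx tau U) / h - Htx tau U) < eps / 3) by (apply Q4; auto).
  replace ((Hx (tau + h) (u (tau + h)) - Hx tau U) / h - (Htx tau U + Lu * ut tau))
    with ((Hux (tau + h) c - Lu) * q + Lu * (q - ut tau) + ((Hx (tau + h) U - Hx tau U) / h - Htx tau U)).
  2:{
      replace (Hx (tau + h) (u (tau + h))) with (Hx (tau + h) U + Hux (tau + h) c * (u (tau + h) - U)) by lra.
      unfold q. field. auto. }
  eapply Rle_lt_trans. apply Rabs_triang. eapply Rle_lt_trans. apply Rplus_le_compat_r. apply Rabs_triang.
  rewrite !Rabs_mult.
  assert (A1 : Rabs (Hux (tau + h) c - Lu) * Rabs q <= eps / 3).
  { apply Rle_trans with (eps / 3 / Q * Q).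
    apply Rmult_le_compat; auto using Rabs_pos; lra.
    right. field. lra. }
  assert (A2 : Rabs Lu * Rabs (q - ut tau) <= eps / 3).
  { apply Rle_trans with ((Rabs Lu + 1) * (eps / 3 / (Rabs Lu + 1))).
    apply Rmult_le_compat; auto using Rabs_pos; lra.
    right. field. lra. }
  lra.
Qed.

Lemma betw_abs a b v M : Rmin a b <= v <= Rmax a b -> Rabs a <= M -> Rabs b <= M -> Rabs v <= M.
Proof. unfold Rmin, Rmax. destruct Rle_dec; unfold Rabs; repeat destruct Rcase_abs; lra. Qed.

Definition cmin (a b : R) := if Rle_dec (Rabs a) (Rabs b) then a else b.

Lemma cmin_l a b : Rabs (cmin a b) <= Rabs a.
Proof. unfold cmin. destruct Rle_dec; lra. Qed.
Lemma cmin_r a b : Rabs (cmin a b) <= Rabs b.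
Proof. unfold cmin. destruct Rle_dec; lra. Qed.
Lemma cmin_sum a b : Rabs (cmin a b - a) + Rabs (b - cmin a b) = Rabs (b - a).
Proof. unfold cmin. destruct Rle_dec; unfold Rminus; rewrite ?Rplus_opp_r, ?Rabs_R0; ring. Qed.

Lemma lip3 (F Fu Fp Fq : R -> R -> R -> R) K L a1 a2 a3 b1 b2 b3 :
  (forall u p q, derivable_pt_lim (fun v => F v p q) u (Fu u p q)) ->
  (forall u p q, derivable_pt_lim (fun v => F u v q) p (Fp u p q)) ->
  (forall u p q, derivable_pt_lim (fun v => F u p v) q (Fq u p q)) ->
  (forall u p q, Rabs u + Rabs p + Rabs q <= K ->
     Rabs (Fu u p q) <= L /\ Rabs (Fp u p q) <= L /\ Rabs (Fq u p q) <= L) ->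
  Rabs a1 + Rabs a2 + Rabs a3 <= K -> Rabs b1 + Rabs b2 + Rabs b3 <= K ->
  Rabs (F b1 b2 b3 - F a1 a2 a3) <= L * (Rabs (b1 - a1) + Rabs (b2 - a2) + Rabs (b3 - a3)).
Proof.
  intros D1 D2 D3 HL HA HB.
  set (c1 := cmin a1 b1). set (c2 := cmin a2 b2). set (c3 := cmin a3 b3).
  pose proof (cmin_l a1 b1). pose proof (cmin_r a1 b1). pose proof (cmin_sum a1 b1).
  pose proof (cmin_l a2 b2). pose proof (cmin_r a2 b2). pose proof (cmin_sum a2 b2).
  pose proof (cmin_l a3 b3). pose proof (cmin_r a3 b3). pose proof (cmin_sum a3 b3).
  fold c1 c2 c3 in H, H0, H1, H2, H3, H4, H5, H6, H7.
  assert (S1 : Rabs (F c1 a2 a3 - F a1 a2 a3) <= L * Rabs (c1 - a1)).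
  { apply (lip1 (fun v => F v a2 a3) (fun v => Fu v a2 a3)). intros; apply D1.
    intros v Hv. apply HL. pose proof (betw_abs _ _ _ (Rabs a1) Hv ltac:(lra) ltac:(lra)). lra. }
  assert (S2 : Rabs (F c1 c2 a3 - F c1 a2 a3) <= L * Rabs (c2 - a2)).
  { apply (lip1 (fun v => F c1 v a3) (fun v => Fp c1 v a3)). intros; apply D2.
    intros v Hv. apply HL. pose proof (betw_abs _ _ _ (Rabs a2) Hv ltac:(lra) ltac:(lra)). lra. }
  assert (S3 : Rabs (F c1 c2 c3 - F c1 c2 a3) <= L * Rabs (c3 - a3)).
  { apply (lip1 (fun v => F c1 c2 v) (fun v => Fq c1 c2 v)). intros; apply D3.
    intros v Hv. apply HL. pose proof (betw_abs _ _ _ (Rabs a3) Hv ltac:(lra) ltac:(lra)). lra. }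
  assert (S4 : Rabs (F b1 c2 c3 - F c1 c2 c3) <= L * Rabs (b1 - c1)).
  { apply (lip1 (fun v => F v c2 c3) (fun v => Fu v c2 c3)). intros; apply D1.
    intros v Hv. apply HL. pose proof (betw_abs _ _ _ (Rabs b1) Hv ltac:(lra) ltac:(lra)). lra. }
  assert (S5 : Rabs (F b1 b2 c3 - F b1 c2 c3) <= L * Rabs (b2 - c2)).
  { apply (lip1 (fun v => F b1 v c3) (fun v => Fp b1 v c3)). intros; apply D2.
    intros v Hv. apply HL. pose proof (betw_abs _ _ _ (Rabs b2) Hv ltac:(lra) ltac:(lra)). lra. }
  assert (S6 : Rabs (F b1 b2 b3 - F b1 b2 c3) <= L * Rabs (b3 - c3)).
  { apply (lip1 (fun v => F b1 b2 v) (fun v => Fq b1 b2 v)). intros; apply D3.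
    intros v Hv. apply HL. pose proof (betw_abs _ _ _ (Rabs b3) Hv ltac:(lra) ltac:(lra)). lra. }
  replace (F b1 b2 b3 - F a1 a2 a3) with
    ((F b1 b2 b3 - F b1 b2 c3) + (F b1 b2 c3 - F b1 c2 c3) + (F b1 c2 c3 - F c1 c2 c3)
     + (F c1 c2 c3 - F c1 c2 a3) + (F c1 c2 a3 - F c1 a2 a3) + (F c1 a2 a3 - F a1 a2 a3)) by ring.
  assert (T6 : forall x1 x2 x3 x4 x5 x6, Rabs (x1 + x2 + x3 + x4 + x5 + x6) <=
     Rabs x1 + Rabs x2 + Rabs x3 + Rabs x4 + Rabs x5 + Rabs x6).
  { intros. repeat (eapply Rle_trans; [apply Rabs_triang|]; apply Rplus_le_compat_r). lra. }
  eapply Rle_trans. apply T6. rewrite <- H1, <- H4, <- H7. lra.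
Qed.

Lemma cont2_y T (g : R -> R -> R) tau : cont2 T g -> inT T tau -> forall y, continuity_pt (fun y => g y tau) y.
Proof.
  intros Hc Ht y. apply cont_ed. intros e He. destruct (Hc y tau Ht e He) as [d [Hd Q]].
  exists d. split; auto. intros y' Hy'. apply Q; auto. rewrite Rminus_diag, Rabs_R0; auto.
Qed.

Lemma cont2_path T (g : R -> R -> R) a b p0 p1 q0 q1 : cont2 T g -> Rabs p1 <= 1 -> Rabs q1 <= 1 ->
  (forall s, a <= s <= b -> inT T (q0 + q1 * s)) ->
  contOn a b (fun s => g (p0 + p1 * s) (q0 + q1 * s)).
Proof.
  intros Hc Hp Hq Hin z Hz e He. destruct (Hc (p0 + p1 * z) (q0 + q1 * z) (Hin z Hz) e He) as [d [Hd Q]].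
  exists d. split; auto. intros z' Hz' Hzz. apply Q; auto.
  - replace (p0 + p1 * z' - (p0 + p1 * z)) with (p1 * (z' - z)) by ring. rewrite Rabs_mult.
    apply Rle_lt_trans with (1 * Rabs (z' - z)). apply Rmult_le_compat_r; auto using Rabs_pos. lra.
  - replace (q0 + q1 * z' - (q0 + q1 * z)) with (q1 * (z' - z)) by ring. rewrite Rabs_mult.
    apply Rle_lt_trans with (1 * Rabs (z' - z)). apply Rmult_le_compat_r; auto using Rabs_pos. lra.
Qed.

Lemma Rabs_cont y0 g : continuity_pt g y0 -> continuity_pt (fun y => Rabs (g y)) y0.
Proof. intros H. apply (continuity_pt_comp g Rabs). auto. apply Rcontinuity_abs. Qed.

Lemma G_contOn T (g : R -> R -> R) x t : cont2 T g -> 0 <= t <= T ->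
  contOn 0 t (fun tau => CI (fun y => g y tau) (x - (t - tau)) (x + (t - tau))).
Proof.
  intros Hc Ht z Hz e He.
  assert (Hzin : inT T z) by (unfold inT; lra).
  set (a := x - t - 1). set (b := x + t + 1).
  destruct (UC T g a b z Hc Hzin ltac:(unfold a, b; lra) 1 ltac:(lra)) as [da [Hda Qa]].
  destruct (continuity_ab_maj (fun y => Rabs (g y z)) a b ltac:(unfold a, b; lra)) as [ym [Hym _]].
  { intros c _. apply Rabs_cont. apply (cont2_y T g z Hc Hzin). }
  set (Mb := Rabs (g ym z)).
  assert (HMb : 0 <= Mb) by apply Rabs_pos.
  destruct (UC T g a b z Hc Hzin ltac:(unfold a, b; lra) (e / (2 * (2 * t + 1)))) as [db [Hdb Qb]].
  { apply Rdiv_lt_0_compat; lra. }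
  set (d := Rmin (Rmin da db) (e / (4 * (Mb + 1)))).
  assert (Hd : 0 < d).
  { unfold d. apply Rmin_pos. apply Rmin_pos; auto. apply Rdiv_lt_0_compat; lra. }
  exists d. split; auto. intros tau Htau Htz.
  assert (Hd1 : Rabs (tau - z) < da) by (eapply Rlt_le_trans; [exact Htz|]; unfold d; eapply Rle_trans; apply Rmin_l).
  assert (Hd2 : Rabs (tau - z) < db) by (eapply Rlt_le_trans; [exact Htz|]; unfold d; eapply Rle_trans; [apply Rmin_l|apply Rmin_r]).
  assert (Hd3 : Rabs (tau - z) < e / (4 * (Mb + 1))) by (eapply Rlt_le_trans; [exact Htz|]; unfold d; apply Rmin_r).
  assert (Htauin : inT T tau) by (unfold inT; lra).
  set (At := x - (t - tau)). set (Bt := x + (t - tau)). set (Az := x - (t - z)). set (Bz := x + (t - z)).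
  assert (exg : forall s u v, inT T s -> ex_RInt (fun y => g y s) u v).
  { intros s u v Hs. apply exR_cont. apply (cont2_y T g s Hc Hs). }
  rewrite <- (CI_Chasles _ At Az Bt) by auto.
  rewrite <- (CI_Chasles _ Az Bz Bt) by auto.
  replace (CI (fun y => g y tau) At Az + (CI (fun y => g y tau) Az Bz + CI (fun y => g y tau) Bz Bt) -
           CI (fun y => g y z) Az Bz)
    with (CI (fun y => g y tau) At Az + CI (fun y => g y tau) Bz Bt +
          (CI (fun y => g y tau) Az Bz - CI (fun y => g y z) Az Bz)) by ring.
  rewrite <- CI_minus by auto.
  assert (Hbd : forall y, a <= y <= b -> Rabs (g y tau) <= Mb + 1).
  { intros y Hy. specialize (Qa y tau Hy Htauin Hd1). specialize (Hym y Hy). simpl in Hym.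
    pose proof (Rabs_triang_inv (g y tau) (g y z)). unfold Mb. lra. }
  assert (S1 : Rabs (CI (fun y => g y tau) At Az) <= Rabs (Az - At) * (Mb + 1)).
  { apply CI_abs_const; auto. intros y Hy. apply Hbd. revert Hy. unfold At, Az, a, b, Rmin, Rmax.
    destruct Rle_dec; lra. }
  assert (S2 : Rabs (CI (fun y => g y tau) Bz Bt) <= Rabs (Bt - Bz) * (Mb + 1)).
  { apply CI_abs_const; auto. intros y Hy. apply Hbd. revert Hy. unfold Bt, Bz, a, b, Rmin, Rmax.
    destruct Rle_dec; lra. }
  assert (S3 : Rabs (CI (fun y => g y tau - g y z) Az Bz) <= Rabs (Bz - Az) * (e / (2 * (2 * t + 1)))).
  { apply CI_abs_const. apply exR_minus; auto. intros y Hy. left. apply Qb; auto.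
    revert Hy. unfold Bz, Az, a, b, Rmin, Rmax. destruct Rle_dec; lra. }
  assert (EAA : Az - At = - (tau - z)) by (unfold At, Az; ring). rewrite EAA in S1. rewrite Rabs_Ropp in S1.
  assert (EBB : Bt - Bz = - (tau - z)) by (unfold Bt, Bz; ring). rewrite EBB in S2. rewrite Rabs_Ropp in S2.
  rewrite (Rabs_right (Bz - Az)) in S3 by (unfold Bz, Az; lra).
  assert (E1 : Rabs (tau - z) * (Mb + 1) <= e / 4).
  { apply Rle_trans with (e / (4 * (Mb + 1)) * (Mb + 1)).
    apply Rmult_le_compat_r; lra. right; field; lra. }
  assert (E2 : (Bz - Az) * (e / (2 * (2 * t + 1))) < e / 2).
  { unfold Bz, Az. apply Rlt_le_trans with ((2 * t + 1) * (e / (2 * (2 * t + 1)))).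
    apply Rmult_lt_compat_r. apply Rdiv_lt_0_compat; lra. lra. right; field; lra. }
  eapply Rle_lt_trans. apply Rabs_triang. eapply Rle_lt_trans. apply Rplus_le_compat_r. apply Rabs_triang.
  lra.
Qed.

Lemma CI_shift (fy : R -> R) a b eta : (forall u v, ex_RInt fy u v) ->
  CI fy (a + eta) (b + eta) - CI fy a b = CI fy b (b + eta) - CI fy a (a + eta).
Proof.
  intros Hex. pose proof (CI_Chasles fy a b (b + eta) (Hex _ _) (Hex _ _)).
  pose proof (CI_Chasles fy a (a + eta) (b + eta) (Hex _ _) (Hex _ _)). lra.
Qed.

Lemma CI_widen (fy : R -> R) a b d : (forall u v, ex_RInt fy u v) ->
  CI fy (a - d) (b + d) - CI fy a b = CI fy (a - d) a + CI fy b (b + d).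
Proof.
  intros Hex. pose proof (CI_Chasles fy (a - d) a (b + d) (Hex _ _) (Hex _ _)).
  pose proof (CI_Chasles fy a b (b + d) (Hex _ _) (Hex _ _)). lra.
Qed.

Definition phiE (A B l s : R) := A + B * exp (l * s).
Definition LpE (A B l s : R) := A * s + B / l * exp (l * s).

Lemma phiE_cont A B l s : continuity_pt (phiE A B l) s.
Proof.
  unfold phiE. apply continuity_pt_plus. apply continuity_pt_const. intros ? ?; reflexivity.
  apply continuity_pt_scal. apply continuity_pt_comp with (f1 := fun y => l * y).
  apply derivable_continuous_pt. apply derivable_pt_scal. apply derivable_pt_id.
  apply derivable_continuous_pt. apply derivable_pt_exp.
Qed.

Lemma exR_phiE A B l a b : ex_RInt (phiE A B l) a b.
Proof. apply exR_cont. intros; apply phiE_cont. Qed.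

Lemma CI_phiE A B l a b : 0 < l -> CI (phiE A B l) a b = LpE A B l b - LpE A B l a.
Proof.
  intros Hl. assert (Hl0 : l <> 0) by lra. assert (H10 : 1 <> 0) by lra.
  rewrite (RInt_ext _ (fun y => A + B * exp (l * (1 * y + 0)))).
  - rewrite (CI_exp A B l 1 0 a b Hl0 H10). unfold LpE. replace (1 * b + 0) with b by ring.
    replace (1 * a + 0) with a by ring. match goal with |- ?x = ?y => change (@eq R x y) end. field. auto.
  - intros x _. unfold phiE. replace (1 * x + 0) with x by ring. auto.
Qed.

Lemma phiE_mono A B l s1 s2 : 0 <= B -> 0 < l -> s1 <= s2 -> phiE A B l s1 <= phiE A B l s2.
Proof.
  intros HB Hl Hs. unfold phiE. apply Rplus_le_compat_l. apply Rmult_le_compat_l; auto.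
  destruct (Req_dec s1 s2) as [->|Hne]. lra. left. apply exp_increasing. apply Rmult_lt_compat_l; lra.
Qed.

Lemma LpE_deriv A B l s : 0 < l -> derivable_pt_lim (LpE A B l) s (phiE A B l s).
Proof.
  intros Hl. apply is_derive_Reals. unfold LpE, phiE. auto_derive. auto. field. lra.
Qed.

Lemma LpE_mono A B l s1 s2 : 0 <= A -> 0 <= B -> 0 < l -> s1 <= s2 -> LpE A B l s1 <= LpE A B l s2.
Proof.
  intros HA HB Hl Hs. unfold LpE. apply Rplus_le_compat. apply Rmult_le_compat_l; auto.
  apply Rmult_le_compat_l. apply Rmult_le_pos; auto. left; apply Rinv_0_lt_compat; auto.
  destruct (Req_dec s1 s2) as [->|Hne]. lra. left. apply exp_increasing. apply Rmult_lt_compat_l; lra.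
Qed.

Lemma LpE_cont A B l s : continuity_pt (LpE A B l) s.
Proof. destruct (Rlt_dec 0 l). apply (dpl_cont _ _ _ (LpE_deriv A B l s r)).
  unfold LpE. apply continuity_pt_plus. apply continuity_pt_scal. apply continuity_pt_id.
  apply continuity_pt_scal. apply continuity_pt_comp with (f1 := fun y => l * y).
  apply derivable_continuous_pt. apply derivable_pt_scal. apply derivable_pt_id.
  apply derivable_continuous_pt. apply derivable_pt_exp.
Qed.

Definition Gf (f : R -> R -> R) x t tau := CI (fun y => f y tau) (x - (t - tau)) (x + (t - tau)).
Definition Wf (f : R -> R -> R) x t := CI (fun tau => Gf f x t tau) 0 t.

Section Wsec.
Variables (T A B l : R) (f : R -> R -> R).
Hypothesis Hc : cont2 T f.
Hypothesis HA : 0 <= A.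
Hypothesis HB : 0 <= B.
Hypothesis Hl : 0 < l.
Hypothesis Hb : forall y tau, inT T tau -> Rabs (f y tau) <= phiE A B l tau.

Let exf tau : inT T tau -> forall u v, ex_RInt (fun y => f y tau) u v.
Proof. intros Ht u v. apply exR_cont. apply (cont2_y T f tau Hc Ht). Qed.

Lemma phiE_pos s : 0 <= phiE A B l s.
Proof. unfold phiE. pose proof (exp_pos (l * s)). nra. Qed.

Lemma sliver tau u v : inT T tau -> Rabs (CI (fun y => f y tau) u v) <= Rabs (v - u) * phiE A B l tau.
Proof. intros Ht. apply CI_abs_const. apply exf; auto. intros; apply Hb; auto. Qed.

Lemma G_bound x t tau : 0 <= tau <= t -> t <= T -> Rabs (Gf f x t tau) <= 2 * (t - tau) * phiE A B l tau.
Proof.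
  intros Ht HT. unfold Gf. eapply Rle_trans. apply sliver. unfold inT; lra.
  right. rewrite Rabs_right by lra. ring.
Qed.

Lemma G_shift_bound x t eta tau : inT T tau ->
  Rabs (Gf f (x + eta) t tau - Gf f x t tau) <= 2 * Rabs eta * phiE A B l tau.
Proof.
  intros Ht. unfold Gf.
  replace (x + eta - (t - tau)) with ((x - (t - tau)) + eta) by ring.
  replace (x + eta + (t - tau)) with ((x + (t - tau)) + eta) by ring.
  rewrite CI_shift by (apply exf; auto).
  eapply Rle_trans. apply Rabs_triang. rewrite Rabs_Ropp.
  pose proof (sliver tau (x + (t - tau)) (x + (t - tau) + eta) Ht).
  pose proof (sliver tau (x - (t - tau)) (x - (t - tau) + eta) Ht).
  replace (x + (t - tau) + eta - (x + (t - tau))) with eta in H by ring.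
  replace (x - (t - tau) + eta - (x - (t - tau))) with eta in H0 by ring. lra.
Qed.

Lemma G_widen_bound x t d tau : inT T tau ->
  Rabs (Gf f x (t + d) tau - Gf f x t tau) <= 2 * Rabs d * phiE A B l tau.
Proof.
  intros Ht. unfold Gf.
  replace (x - (t + d - tau)) with ((x - (t - tau)) - d) by ring.
  replace (x + (t + d - tau)) with ((x + (t - tau)) + d) by ring.
  rewrite CI_widen by (apply exf; auto).
  eapply Rle_trans. apply Rabs_triang.
  pose proof (sliver tau (x - (t - tau) - d) (x - (t - tau)) Ht).
  pose proof (sliver tau (x + (t - tau)) (x + (t - tau) + d) Ht).
  replace (x - (t - tau) - (x - (t - tau) - d)) with d in H by ring.
  replace (x + (t - tau) + d - (x + (t - tau))) with d in H0 by ring. lra.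
Qed.

Lemma exG x t a b : 0 <= a -> a <= b -> b <= t -> t <= T -> ex_RInt (Gf f x t) a b.
Proof.
  intros. apply contOn_ex_RInt; auto. apply (contOn_sub 0 t); try lra.
  unfold Gf. apply (G_contOn T); auto. lra.
Qed.

Lemma W_bound x t : 0 <= t <= T -> Rabs (Wf f x t) <= 2 * t * (LpE A B l t - LpE A B l 0).
Proof.
  intros Ht. unfold Wf.
  eapply Rle_trans. apply (CI_bound _ (fun tau => 2 * t * phiE A B l tau)).
  lra. apply exG; lra. apply exR_scal. apply exR_phiE.
  intros tau Htau. eapply Rle_trans. apply G_bound; lra.
  apply Rmult_le_compat_r. apply phiE_pos. lra.
  rewrite CI_scal by apply exR_phiE. rewrite CI_phiE by auto. lra.
Qed.

Lemma W_shift x t eta : 0 <= t <= T ->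
  Rabs (Wf f (x + eta) t - Wf f x t) <= 2 * Rabs eta * (LpE A B l t - LpE A B l 0).
Proof.
  intros Ht. unfold Wf. rewrite <- CI_minus by (apply exG; lra).
  eapply Rle_trans. apply (CI_bound _ (fun tau => 2 * Rabs eta * phiE A B l tau)).
  lra. apply exR_minus; apply exG; lra. apply exR_scal. apply exR_phiE.
  intros tau Htau. apply G_shift_bound. unfold inT; lra.
  rewrite CI_scal by apply exR_phiE. rewrite CI_phiE by auto. lra.
Qed.

Lemma W_time x t d : 0 <= t -> 0 < d -> t + d <= T ->
  Rabs (Wf f x (t + d) - Wf f x t) <= 2 * d * (LpE A B l t - LpE A B l 0) + 2 * d * d * phiE A B l (t + d).
Proof.
  intros Ht Hd HT. unfold Wf.
  rewrite <- (CI_Chasles _ 0 t (t + d)) by (apply exG; lra).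
  match goal with |- Rabs (?a + ?b - ?c) <= _ => replace (a + b - c) with ((a - c) + b) by ring end.
  rewrite <- CI_minus by (apply exG; lra).
  eapply Rle_trans. apply Rabs_triang. apply Rplus_le_compat.
  - eapply Rle_trans. apply (CI_bound _ (fun tau => 2 * d * phiE A B l tau)).
    lra. apply exR_minus; apply exG; lra. apply exR_scal. apply exR_phiE.
    intros tau Htau. eapply Rle_trans. apply G_widen_bound. unfold inT; lra.
    rewrite Rabs_right by lra. lra.
    rewrite CI_scal by apply exR_phiE. rewrite CI_phiE by auto. lra.
  - eapply Rle_trans. apply (CI_abs_const _ _ _ (2 * d * phiE A B l (t + d))). apply exG; lra.
    intros tau Htau. rewrite Rmin_left, Rmax_right in Htau by lra.
    eapply Rle_trans. apply G_bound; lra.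
    apply Rmult_le_compat. nra. apply phiE_pos. lra. apply phiE_mono; lra.
    replace (t + d - t) with d by ring. rewrite Rabs_right by lra. lra.
Qed.

End Wsec.

Lemma LpE_incr A B l s d : 0 <= B -> 0 < l -> 0 <= d ->
  LpE A B l (s + d) - LpE A B l s <= d * phiE A B l (s + d).
Proof.
  intros HB Hl Hd. pose proof (MVT_gen (LpE A B l) s (s + d) (phiE A B l)) as M.
  destruct M as [c [Hc E]].
  - intros x _. apply is_derive_Reals. apply LpE_deriv; auto.
  - intros x _. apply LpE_cont.
  - rewrite Rmin_left, Rmax_right in Hc by lra. rewrite E.
    replace (s + d - s) with d by ring. rewrite Rmult_comm.
    apply Rmult_le_compat_l; auto. apply phiE_mono; lra.
Qed.

Lemma scal_m1 (z : R) : scal (-1) z = - z.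
Proof. unfold scal. simpl. unfold mult. simpl. ring. Qed.

Section Hsec.
Variables (T A B l : R) (h k : R -> R -> R).
Hypothesis Hc : cont2 T h.
Hypothesis HA : 0 <= A.
Hypothesis HB : 0 <= B.
Hypothesis Hl : 0 < l.
Hypothesis H0 : forall y, h y 0 = 0.
Hypothesis Hk : forall y tau, inT T tau -> deriv_within (inT T) (fun s => h y s) tau (k y tau).
Hypothesis Hkb : forall y tau, inT T tau -> Rabs (k y tau) <= phiE A B l tau.

Let Kp := LpE A B l.

Lemma h_diff y t1 t2 : 0 <= t1 -> t1 <= t2 -> t2 <= T -> Rabs (h y t2 - h y t1) <= Kp t2 - Kp t1.
Proof.
  intros. apply (mvt_within T (fun s => h y s) (fun s => k y s) Kp (phiE A B l)); auto.
  intros s Hs. apply Hk. unfold inT; lra.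
  intros s. apply LpE_deriv; auto.
  intros s Hs. apply Hkb. unfold inT; lra.
Qed.

Lemma h_bound y t : 0 <= t <= T -> Rabs (h y t) <= Kp t - Kp 0.
Proof. intros. replace (h y t) with (h y t - h y 0) by (rewrite H0; ring). apply h_diff; lra. Qed.

Lemma Kp_mono s1 s2 : s1 <= s2 -> Kp s1 <= Kp s2.
Proof. intros. apply LpE_mono; auto. Qed.

Lemma ex_diag c a b : a <= b -> (forall y, a <= y <= b -> 0 <= c - y <= T) ->
  ex_RInt (fun y => h y (c - y)) a b.
Proof.
  intros Hab Hin. apply ex_RInt_ext with (f := fun s => h (0 + 1 * s) (c + -1 * s)).
  intros x _. f_equal; ring.
  apply contOn_ex_RInt; auto. apply (cont2_path T); auto.
  unfold Rabs; destruct Rcase_abs; lra. unfold Rabs; destruct Rcase_abs; lra.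
  intros s Hs. specialize (Hin s Hs). unfold inT; lra.
Qed.

Lemma ex_line x t a b : 0 <= a -> a <= b -> b <= t -> t <= T ->
  ex_RInt (fun tau => h (x + (t - tau)) tau) a b.
Proof.
  intros. apply ex_RInt_ext with (f := fun s => h ((x + t) + -1 * s) (0 + 1 * s)).
  intros z _. f_equal; ring.
  apply contOn_ex_RInt; auto. apply (cont2_path T); auto.
  unfold Rabs; destruct Rcase_abs; lra. unfold Rabs; destruct Rcase_abs; lra.
  intros s Hs. unfold inT; lra.
Qed.

Definition Psi a b := CI (fun y => h y (b - y)) a b.
Definition Pf x t := CI (fun tau => h (x + (t - tau)) tau) 0 t.

Lemma P_eq x t : 0 <= t <= T -> Pf x t = Psi x (x + t).
Proof.
  intros Ht. unfold Pf, Psi.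
  assert (Ex : ex_RInt (fun y => h y (x + t - y)) (-1 * 0 + (x + t)) (-1 * t + (x + t))).
  { replace (-1 * 0 + (x + t)) with (x + t) by ring. replace (-1 * t + (x + t)) with x by ring.
    apply exR_swap. apply ex_diag. lra. intros; lra. }
  pose proof (RInt_comp_lin (V:=R_CompleteNormedModule) (fun y => h y (x + t - y)) (-1) (x + t) 0 t Ex) as E.
  replace (-1 * 0 + (x + t)) with (x + t) in E by ring. replace (-1 * t + (x + t)) with x in E by ring.
  rewrite (RInt_ext _ (fun tau => - h (x + (t - tau)) tau)) in E.
  2:{ intros z _. rewrite scal_m1. f_equal. f_equal; ring. }
  rewrite (CI_opp (fun tau => h (x + (t - tau)) tau)) in E by (apply ex_line; lra).
  rewrite (CI_swap (fun y => h y (x + t - y)) x (x + t)) in E by (apply ex_diag; [lra| intros; lra]).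
  replace (x + t - x) with t by ring.
  assert (Hr : forall a b : R, - a = - b -> a = b) by (intros; lra).
  apply Hr. rewrite E. reflexivity.
Qed.

Lemma exp_aff_cont A' B' p c y : continuity_pt (fun y => A' + B' * exp (l * (p * y + c))) y.
Proof.
  apply continuity_pt_plus. apply continuity_pt_const. intros ? ?; reflexivity.
  apply continuity_pt_scal. apply continuity_pt_comp with (f1 := fun y => l * (p*y+c)).
  apply derivable_continuous_pt. apply derivable_pt_scal. apply derivable_pt_plus.
  apply derivable_pt_scal. apply derivable_pt_id. apply derivable_pt_const.
  apply derivable_continuous_pt. apply derivable_pt_exp.
Qed.

Lemma Psi_a a b eta : 0 < eta -> a + eta <= b -> b - a <= T ->
  Rabs (Psi (a + eta) b - Psi a b) <= eta * (Kp (b - a) - Kp 0).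
Proof.
  intros He Hab HT. unfold Psi.
  rewrite <- (CI_Chasles _ a (a + eta) b) by (apply ex_diag; [lra| intros; lra]).
  match goal with |- Rabs (?u - (?v + ?u)) <= _ => replace (u - (v + u)) with (- v) by ring end.
  rewrite Rabs_Ropp. eapply Rle_trans. apply CI_abs_const. apply ex_diag; [lra| intros; lra].
  2:{ replace (a + eta - a) with eta by ring. rewrite Rabs_right by lra. apply Rle_refl. }
  intros y Hy. rewrite Rmin_left, Rmax_right in Hy by lra.
  eapply Rle_trans. apply h_bound; lra. apply Rplus_le_compat_r. apply Kp_mono. lra.
Qed.

Lemma Psi_b a b d : 0 < d -> a <= b -> b + d - a <= T ->
  Rabs (Psi a (b + d) - Psi a b) <= d * (Kp (b + d - a) - Kp 0).
Proof.
  intros Hd Hab HT. unfold Psi.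
  rewrite <- (CI_Chasles _ a b (b + d)) by (apply ex_diag; [lra| intros; lra]).
  match goal with |- Rabs (?u + ?w - ?v) <= _ => replace (u + w - v) with ((u - v) + w) by ring end.
  rewrite <- CI_minus by (apply ex_diag; [lra| intros; lra]).
  eapply Rle_trans. apply Rabs_triang.
  assert (S1 : Rabs (CI (fun y => h y (b + d - y) - h y (b - y)) a b) <= d * (Kp (b + d - a) - Kp d)).
  { eapply Rle_trans. apply (CI_bound _ (fun y => d * A + d * B * exp (l * (-1 * y + (b + d))))); auto.
    apply exR_minus; apply ex_diag; try lra; intros; lra.
    apply exR_cont. intros; apply exp_aff_cont.
    intros y Hy. replace (b + d - y) with ((b - y) + d) by ring.
    eapply Rle_trans. apply h_diff; lra. unfold Kp. eapply Rle_trans. apply LpE_incr; lra.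
    unfold phiE. replace (l * (b - y + d)) with (l * (-1 * y + (b + d))) by ring. lra.
    rewrite CI_exp by lra. unfold Kp, LpE.
    replace (-1 * b + (b + d)) with d by ring. replace (-1 * a + (b + d)) with (b + d - a) by ring.
    apply Req_le. field. lra. }
  assert (S2 : Rabs (CI (fun y => h y (b + d - y)) b (b + d)) <= d * (Kp d - Kp 0)).
  { eapply Rle_trans. apply CI_abs_const. apply ex_diag; [lra| intros; lra].
    2:{ replace (b + d - b) with d by ring. rewrite Rabs_right by lra. apply Rle_refl. }
    intros y Hy. rewrite Rmin_left, Rmax_right in Hy by lra.
    eapply Rle_trans. apply h_bound; lra. apply Rplus_le_compat_r. apply Kp_mono. lra. }
  lra.
Qed.

Lemma P_bound x t : 0 <= t <= T -> Rabs (Pf x t) <= t * (Kp t - Kp 0).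
Proof.
  intros Ht. unfold Pf. eapply Rle_trans. apply CI_abs_const. apply ex_line; lra.
  2:{ rewrite Rminus_0_r, Rabs_right by lra. apply Rle_refl. }
  intros tau Htau. rewrite Rmin_left, Rmax_right in Htau by lra.
  eapply Rle_trans. apply h_bound; lra. apply Rplus_le_compat_r. apply Kp_mono. lra.
Qed.

Lemma P_x x t eta : 0 < eta -> eta < t -> t <= T ->
  Rabs (Pf (x + eta) t - Pf x t) <= eta * (2 * (Kp t - Kp 0)).
Proof.
  intros. rewrite !P_eq by lra.
  replace (x + eta + t) with ((x + t) + eta) by ring.
  match goal with |- Rabs (?u - ?v) <= _ =>
    replace (u - v) with ((u - Psi (x + eta) (x + t)) + (Psi (x + eta) (x + t) - v)) by ring end.
  eapply Rle_trans. apply Rabs_triang.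
  pose proof (Psi_b (x + eta) (x + t) eta ltac:(lra) ltac:(lra) ltac:(lra)) as Q1.
  pose proof (Psi_a x (x + t) eta ltac:(lra) ltac:(lra) ltac:(lra)) as Q2.
  replace (x + t + eta - (x + eta)) with t in Q1 by ring.
  replace (x + t - x) with t in Q2 by ring. lra.
Qed.

Lemma P_t x t d : 0 <= t -> 0 < d -> t + d <= T ->
  Rabs (Pf x (t + d) - Pf x t) <= d * (Kp (t + d) - Kp 0).
Proof.
  intros. rewrite !P_eq by lra. replace (x + (t + d)) with ((x + t) + d) by ring.
  eapply Rle_trans. apply Psi_b; lra. replace (x + t + d - x) with (t + d) by ring. lra.
Qed.
End Hsec.

Lemma min4 a b c d : 0 < a -> 0 < b -> 0 < c -> 0 < d -> exists m, 0 < m /\ m <= a /\ m <= b /\ m <= c /\ m <= d.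
Proof.
  intros. exists (Rmin (Rmin a b) (Rmin c d)). split. repeat apply Rmin_pos; auto.
  pose proof (Rmin_l (Rmin a b) (Rmin c d)). pose proof (Rmin_r (Rmin a b) (Rmin c d)).
  pose proof (Rmin_l a b). pose proof (Rmin_r a b). pose proof (Rmin_l c d). pose proof (Rmin_r c d). lra.
Qed.

Lemma cont2_Fop T F u ux ut : cont5 T F -> cont2 T u -> cont2 T ux -> cont2 T ut -> cont2 T (Fop F u ux ut).
Proof.
  intros HF Hu Hx Ht x t Htin e He. unfold Fop.
  destruct (HF x t (u x t) (ux x t) (ut x t) Htin e He) as [d [Hd Q]].
  destruct (Hu x t Htin d Hd) as [d1 [Hd1 Q1]].
  destruct (Hx x t Htin d Hd) as [d2 [Hd2 Q2]].
  destruct (Ht x t Htin d Hd) as [d3 [Hd3 Q3]].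
  destruct (min4 d d1 d2 d3) as [m [Hm [M1 [M2 [M3 M4]]]]]; auto.
  exists m. split; auto. intros x' t' Ht' Hxx Htt. apply Q; auto; try lra.
  apply Q1; auto; lra. apply Q2; auto; lra. apply Q3; auto; lra.
Qed.

Lemma cont2_Hop T H u : cont3 T H -> cont2 T u -> cont2 T (Hop H u).
Proof.
  intros HH Hu x t Htin e He. unfold Hop.
  destruct (HH x t (u x t) Htin e He) as [d [Hd Q]].
  destruct (Hu x t Htin d Hd) as [d1 [Hd1 Q1]].
  exists (Rmin d d1). split. apply Rmin_pos; auto.
  pose proof (Rmin_l d d1). pose proof (Rmin_r d d1).
  intros x' t' Ht' Hxx Htt. apply Q; auto; try lra. apply Q1; auto; lra.
Qed.

Lemma cont2_minus T f g : cont2 T f -> cont2 T g -> cont2 T (fun x t => f x t - g x t).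
Proof.
  intros Hf Hg x t Htin e He.
  destruct (Hf x t Htin (e/2) ltac:(lra)) as [d1 [Hd1 Q1]].
  destruct (Hg x t Htin (e/2) ltac:(lra)) as [d2 [Hd2 Q2]].
  exists (Rmin d1 d2). split. apply Rmin_pos; auto.
  pose proof (Rmin_l d1 d2). pose proof (Rmin_r d1 d2).
  intros x' t' Ht' Hxx Htt. specialize (Q1 x' t' Ht' ltac:(lra) ltac:(lra)).
  specialize (Q2 x' t' Ht' ltac:(lra) ltac:(lra)).
  replace (f x' t' - g x' t' - (f x t - g x t)) with ((f x' t' - f x t) - (g x' t' - g x t)) by ring.
  eapply Rle_lt_trans. apply Rabs_triang. rewrite Rabs_Ropp. lra.
Qed.

Lemma cont2_neg T h : cont2 T h -> cont2 T (fun y t => h (- y) t).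
Proof.
  intros Hh x t Htin e He. destruct (Hh (- x) t Htin e He) as [d [Hd Q]].
  exists d. split; auto. intros x' t' Ht' Hxx Htt. apply Q; auto.
  replace (- x' - - x) with (- (x' - x)) by ring. rewrite Rabs_Ropp. auto.
Qed.

Definition Qf (h : R -> R -> R) x t := CI (fun tau => h (x - (t - tau)) tau) 0 t.

Lemma ex_line2 T (h : R -> R -> R) x t : cont2 T h -> 0 <= t <= T ->
  ex_RInt (fun tau => h (x - (t - tau)) tau) 0 t.
Proof.
  intros Hc Ht. apply ex_RInt_ext with (f := fun s => h ((x - t) + 1 * s) (0 + 1 * s)).
  intros z _. f_equal; ring.
  apply contOn_ex_RInt; try lra. apply (cont2_path T); auto.
  unfold Rabs; destruct Rcase_abs; lra. unfold Rabs; destruct Rcase_abs; lra.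
  intros s Hs. unfold inT; lra.
Qed.

Lemma ex_line1 T (h : R -> R -> R) x t : cont2 T h -> 0 <= t <= T ->
  ex_RInt (fun tau => h (x + (t - tau)) tau) 0 t.
Proof.
  intros Hc Ht. apply ex_RInt_ext with (f := fun s => h ((x + t) + -1 * s) (0 + 1 * s)).
  intros z _. f_equal; ring.
  apply contOn_ex_RInt; try lra. apply (cont2_path T); auto.
  unfold Rabs; destruct Rcase_abs; lra. unfold Rabs; destruct Rcase_abs; lra.
  intros s Hs. unfold inT; lra.
Qed.

Lemma exGf T g x t : cont2 T g -> 0 <= t <= T -> ex_RInt (Gf g x t) 0 t.
Proof. intros. apply contOn_ex_RInt; try lra. unfold Gf. apply (G_contOn T); auto. Qed.

Lemma Iop_expand T a b g hh x t : cont2 T g -> cont2 T hh -> 0 <= t <= T ->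
  Iop a b g hh x t = / 2 * (a (x + t) + a (x - t)) + / 2 * DR b (x - t) (x + t)
    + / 2 * Wf g x t + / 2 * (Pf hh x t - Qf hh x t).
Proof.
  intros Hg Hh Ht. unfold Iop.
  assert (E1 : DR (fun tau => DR (fun y => g y tau) (x - (t - tau)) (x + (t - tau))) 0 t = Wf g x t).
  { assert (Ext : forall z, Rmin 0 t < z < Rmax 0 t ->
       Gf g x t z = DR (fun y => g y z) (x - (t - z)) (x + (t - z))).
    { intros z Hz. rewrite Rmin_left, Rmax_right in Hz by lra. unfold Gf. symmetry. apply DR_eq.
      apply exR_cont. apply (cont2_y T g z Hg). unfold inT; lra. }
    rewrite DR_eq. unfold Wf. symmetry. apply RInt_ext. auto.
    eapply ex_RInt_ext. exact Ext. apply (exGf T); auto. }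
  assert (E2 : DR (fun tau => hh (x + (t - tau)) tau - hh (x - (t - tau)) tau) 0 t = Pf hh x t - Qf hh x t).
  { rewrite DR_eq. unfold Pf, Qf. apply CI_minus. apply (ex_line1 T); auto. apply (ex_line2 T); auto.
    apply exR_minus. apply (ex_line1 T); auto. apply (ex_line2 T); auto. }
  rewrite E1, E2. ring.
Qed.

Lemma W_minus T f1 f2 x t : cont2 T f1 -> cont2 T f2 -> 0 <= t <= T ->
  Wf f2 x t - Wf f1 x t = Wf (fun y tau => f2 y tau - f1 y tau) x t.
Proof.
  intros H1 H2 Ht. unfold Wf. rewrite <- CI_minus by (apply (exGf T); auto).
  apply RInt_ext. intros z Hz. rewrite Rmin_left, Rmax_right in Hz by lra.
  unfold Gf. symmetry. apply CI_minus; apply exR_cont; [apply (cont2_y T f2 z H2)|apply (cont2_y T f1 z H1)];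
  unfold inT; lra.
Qed.

Lemma P_minus T h1 h2 x t : cont2 T h1 -> cont2 T h2 -> 0 <= t <= T ->
  Pf h2 x t - Pf h1 x t = Pf (fun y tau => h2 y tau - h1 y tau) x t.
Proof.
  intros H1 H2 Ht. unfold Pf. rewrite <- CI_minus by (apply (ex_line1 T); auto). reflexivity.
Qed.

Lemma Q_minus T h1 h2 x t : cont2 T h1 -> cont2 T h2 -> 0 <= t <= T ->
  Qf h2 x t - Qf h1 x t = Qf (fun y tau => h2 y tau - h1 y tau) x t.
Proof.
  intros H1 H2 Ht. unfold Qf. rewrite <- CI_minus by (apply (ex_line2 T); auto). reflexivity.
Qed.

Lemma Q_P h x t : Qf h x t = Pf (fun y tau => h (- y) tau) (- x) t.
Proof. unfold Qf, Pf. apply RInt_ext. intros z _. f_equal. ring. Qed.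

Lemma exp_mono a b : a <= b -> exp a <= exp b.
Proof. intros. destruct (Req_dec a b) as [->|]. lra. left. apply exp_increasing. lra. Qed.

Definition Mset (f : R -> R -> R) (T : R) := fun r => exists x t, inT T t /\ r = Rabs (f x t).

Lemma M0_lub f T : 0 <= T -> bnd T f -> is_lub (Mset f T) (M0 f T).
Proof.
  intros HT [Bd HB]. unfold M0. apply epsilon_spec.
  destruct (completeness (Mset f T)) as [m Hm].
  - exists Bd. intros r [x [t [Ht ->]]]. apply HB; auto.
  - exists (Rabs (f 0 0)). exists 0, 0. split; auto. unfold inT; lra.
  - exists m. exact Hm.
Qed.

Lemma M0_ub f T x t : 0 <= T -> bnd T f -> inT T t -> Rabs (f x t) <= M0 f T.
Proof. intros HT Hb Ht. destruct (M0_lub f T HT Hb) as [Hu _]. apply Hu. exists x, t. auto. Qed.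

Lemma M0_le f T Bd : 0 <= T -> bnd T f -> (forall x t, inT T t -> Rabs (f x t) <= Bd) -> M0 f T <= Bd.
Proof. intros HT Hb H. destruct (M0_lub f T HT Hb) as [_ Hl]. apply Hl. intros r [x [t [Ht ->]]]. auto. Qed.

Lemma M0_ge0 f T : 0 <= T -> bnd T f -> 0 <= M0 f T.
Proof. intros HT Hb. eapply Rle_trans. apply Rabs_pos. apply (M0_ub f T 0 0); auto. unfold inT; lra. Qed.

Definition lamf (T K : R) := 2 * (T + 3) * (2 * K + K * K) + 1.
Definition Cfun (T K : R) :=
  6 * (Rmax T 0 + 3) * (2 + Rmax K 0) * exp (lamf (Rmax T 0) (Rmax K 0) * Rmax T 0).

Lemma Cfun_pos T K : 0 < Cfun T K.
Proof.
  unfold Cfun. pose proof (Rmax_r T 0). pose proof (Rmax_r K 0). pose proof (exp_pos (lamf (Rmax T 0) (Rmax K 0) * Rmax T 0)).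
  apply Rmult_lt_0_compat; auto. apply Rmult_lt_0_compat; lra.
Qed.

Lemma Rmax0_mono a b : a <= b -> Rmax a 0 <= Rmax b 0.
Proof. unfold Rmax. repeat destruct Rle_dec; lra. Qed.

Lemma Cfun_mono T T' K K' : T <= T' -> K <= K' -> Cfun T K <= Cfun T' K'.
Proof.
  intros HT HK. unfold Cfun.
  pose proof (Rmax0_mono _ _ HT). pose proof (Rmax0_mono _ _ HK).
  pose proof (Rmax_r T 0). pose proof (Rmax_r K 0).
  set (t := Rmax T 0) in *. set (t' := Rmax T' 0) in *. set (k := Rmax K 0) in *. set (k' := Rmax K' 0) in *.
  assert (Hl : lamf t k * t <= lamf t' k' * t').
  { unfold lamf. assert (2 * k + k * k <= 2 * k' + k' * k') by nra.
    assert (0 <= 2 * k + k * k) by nra.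
    assert ((t + 3) * (2 * k + k * k) <= (t' + 3) * (2 * k' + k' * k')) by nra.
    assert (0 <= 2 * (t + 3) * (2 * k + k * k) + 1) by nra. nra. }
  apply exp_mono in Hl. pose proof (exp_pos (lamf t k * t)).
  apply Rmult_le_compat; try nra.
Qed.

Section MainSec.
Variables (T K eps : R)
      (F1 F1u F1p F1q F2 F2u F2p F2q : R -> R -> R -> R -> R -> R)
      (H1 H1t H1u H1tu H1uu H2 H2t H2u H2tu H2uu : R -> R -> R -> R)
      (a b : R -> R)
      (u1 u1x u1t u2 u2x u2t : R -> R -> R).
Hypothesis HT : 0 < T.
Hypothesis rF1 : regF T F1 F1u F1p F1q.
Hypothesis rF2 : regF T F2 F2u F2p F2q.
Hypothesis rH1 : regH T H1 H1t H1u H1tu H1uu.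
Hypothesis rH2 : regH T H2 H2t H2u H2tu H2uu.
Hypothesis C1 : isC1 T u1 u1x u1t.
Hypothesis C2 : isC1 T u2 u2x u2t.
Hypothesis E1 : forall x t, inT T t -> u1 x t = Iop a b (Fop F1 u1 u1x u1t) (Hop H1 u1) x t.
Hypothesis E2 : forall x t, inT T t -> u2 x t = Iop a b (Fop F2 u2 u2x u2t) (Hop H2 u2) x t.
Hypothesis Mb1 : M1_le u1 u1x u1t T K.
Hypothesis Mb2 : M1_le u2 u2x u2t T K.
Hypothesis H0 : forall x u, H1 x 0 u = H2 x 0 u.
Hypothesis BF : forall x t u p q, inS5 T K x t u p q ->
       Rabs (F1u x t u p q) <= K /\ Rabs (F1p x t u p q) <= K /\ Rabs (F1q x t u p q) <= K.
Hypothesis BH : forall x t u, inS3 T K x t u ->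
       Rabs (H1u x t u) <= K /\ Rabs (H1tu x t u) <= K /\ Rabs (H1uu x t u) <= K.
Hypothesis DF : forall x t u p q, inS5 T K x t u p q -> Rabs (F2 x t u p q - F1 x t u p q) <= eps.
Hypothesis DH : forall x t u, inS3 T K x t u ->
       Rabs (H2 x t u - H1 x t u) <= eps /\ Rabs (H2t x t u - H1t x t u) <= eps /\
       Rabs (H2u x t u - H1u x t u) <= eps.

Lemma pw_bound (u ux ut : R -> R -> R) x t : M1_le u ux ut T K -> inT T t ->
  Rabs (u x t) + Rabs (ux x t) + Rabs (ut x t) <= K.
Proof.
  intros [B1 [B2 [B3 HM]]] Ht. unfold M1 in HM.
  pose proof (M0_ub u T x t ltac:(lra) B1 Ht). pose proof (M0_ub ux T x t ltac:(lra) B2 Ht).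
  pose proof (M0_ub ut T x t ltac:(lra) B3 Ht). lra.
Qed.

Lemma K0 : 0 <= K.
Proof.
  pose proof (pw_bound u1 u1x u1t 0 0 Mb1 ltac:(unfold inT; lra)).
  pose proof (Rabs_pos (u1 0 0)). pose proof (Rabs_pos (u1x 0 0)). pose proof (Rabs_pos (u1t 0 0)). lra.
Qed.

Lemma eps0 : 0 <= eps.
Proof.
  eapply Rle_trans. apply Rabs_pos. apply (DF 0 0 0 0 0). split. unfold inT; lra.
  rewrite Rabs_R0. pose proof K0. lra.
Qed.

Let f := fun y tau => Fop F2 u2 u2x u2t y tau - Fop F1 u1 u1x u1t y tau.
Let h := fun y tau => Hop H2 u2 y tau - Hop H1 u1 y tau.
Let ht := fun y tau => h (- y) tau.
Let k := fun y tau => (H2t y tau (u2 y tau) + H2u y tau (u2 y tau) * u2t y tau)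
                    - (H1t y tau (u1 y tau) + H1u y tau (u1 y tau) * u1t y tau).
Let kt := fun y tau => k (- y) tau.
Let w := diff2 u2 u1.
Let wx := diff2 u2x u1x.
Let wt := diff2 u2t u1t.
Let m := fun y tau => Rabs (w y tau) + Rabs (wx y tau) + Rabs (wt y tau).

Lemma cF1 : cont2 T (Fop F1 u1 u1x u1t).
Proof. destruct rF1 as [c _]. destruct C1 as [c1 [c2 [c3 _]]]. apply cont2_Fop; auto. Qed.
Lemma cF2 : cont2 T (Fop F2 u2 u2x u2t).
Proof. destruct rF2 as [c _]. destruct C2 as [c1 [c2 [c3 _]]]. apply cont2_Fop; auto. Qed.
Lemma cH1 : cont2 T (Hop H1 u1).
Proof. destruct rH1 as [c _]. destruct C1 as [c1 _]. apply cont2_Hop; auto. Qed.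
Lemma cH2 : cont2 T (Hop H2 u2).
Proof. destruct rH2 as [c _]. destruct C2 as [c1 _]. apply cont2_Hop; auto. Qed.

Lemma cf : cont2 T f.
Proof. apply cont2_minus. apply cF2. apply cF1. Qed.
Lemma ch : cont2 T h.
Proof. apply cont2_minus. apply cH2. apply cH1. Qed.
Lemma cht : cont2 T ht.
Proof. apply cont2_neg. apply ch. Qed.

Lemma ID x t : inT T t -> w x t = / 2 * Wf f x t + / 2 * (Pf h x t - Pf ht (- x) t).
Proof.
  intros Ht. unfold w, diff2. rewrite E1, E2 by auto.
  rewrite (Iop_expand T _ _ _ _ x t cF2 cH2 Ht).
  rewrite (Iop_expand T _ _ _ _ x t cF1 cH1 Ht).
  pose proof (W_minus T _ _ x t cF1 cF2 Ht) as Q1.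
  pose proof (P_minus T _ _ x t cH1 cH2 Ht) as Q2.
  pose proof (Q_minus T _ _ x t cH1 cH2 Ht) as Q3.
  rewrite (Q_P (fun y tau => Hop H2 u2 y tau - Hop H1 u1 y tau)) in Q3. cbv beta in Q3. unfold f, ht, h. lra.
Qed.

Lemma w0 y : w y 0 = 0.
Proof.
  rewrite ID by (unfold inT; lra). unfold Wf, Pf. rewrite !CI_point. ring.
Qed.

Lemma u0 y : u2 y 0 = u1 y 0.
Proof. pose proof (w0 y). unfold w, diff2 in H. lra. Qed.

Lemma h0 y : h y 0 = 0.
Proof. unfold h, Hop. rewrite u0, H0. ring. Qed.

Lemma chainH (H Ht Hu Htu Huu : R -> R -> R -> R) (u ux ut : R -> R -> R) y tau :
  regH T H Ht Hu Htu Huu -> isC1 T u ux ut -> inT T tau ->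
  deriv_within (inT T) (fun s => H y s (u y s)) tau (Ht y tau (u y tau) + Hu y tau (u y tau) * ut y tau).
Proof.
  intros [cH [cHt [cHu [cHtu [cHuu [per D]]]]]] [_ [_ [_ Du]]] Htau.
  apply (chain T (fun s v => H y s v) (fun s v => Ht y s v) (fun s v => Hu y s v) (fun s => u y s) (fun s => ut y s) tau Htau).
  - intros v. apply (D y tau v Htau).
  - intros s v Hs. apply (D y s v Hs).
  - intros e He. destruct (cHu y tau (u y tau) Htau e He) as [d [Hd Q]].
    exists d. split; auto. intros s v Hs Hst Hv. apply Q; auto. rewrite Rminus_diag, Rabs_R0; auto.
  - apply (Du y tau Htau).
Qed.

Lemma dh y tau : inT T tau -> deriv_within (inT T) (fun s => h y s) tau (k y tau).
Proof.
  intros Ht. unfold h, Hop, k. apply dw_minus.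
  apply (chainH H2 H2t H2u H2tu H2uu u2 u2x u2t); auto.
  apply (chainH H1 H1t H1u H1tu H1uu u1 u1x u1t); auto.
Qed.

Lemma fbound y tau : inT T tau -> Rabs (f y tau) <= eps + K * m y tau.
Proof.
  intros Ht. unfold f, Fop, m, w, wx, wt, diff2.
  pose proof (pw_bound u1 u1x u1t y tau Mb1 Ht) as P1.
  pose proof (pw_bound u2 u2x u2t y tau Mb2 Ht) as P2.
  destruct rF1 as [_ [_ [_ [_ [_ D]]]]].
  match goal with |- Rabs (?A - ?B) <= _ =>
    replace (A - B) with ((A - F1 y tau (u2 y tau) (u2x y tau) (u2t y tau)) + (F1 y tau (u2 y tau) (u2x y tau) (u2t y tau) - B)) by ring end.
  eapply Rle_trans. apply Rabs_triang. apply Rplus_le_compat.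
  - apply DF. split; auto.
  - apply (lip3 (fun u p q => F1 y tau u p q) (fun u p q => F1u y tau u p q) (fun u p q => F1p y tau u p q)
      (fun u p q => F1q y tau u p q) K K); auto.
    + intros; apply (D y tau u p q Ht).
    + intros; apply (D y tau u p q Ht).
    + intros; apply (D y tau u p q Ht).
    + intros u p q Hs. apply BF. split; auto.
Qed.

Lemma kbound y tau : inT T tau -> Rabs (k y tau) <= (1 + K) * eps + (K + K * K) * m y tau.
Proof.
  intros Ht. unfold k, m, w, wx, wt, diff2.
  pose proof (pw_bound u1 u1x u1t y tau Mb1 Ht) as P1.
  pose proof (pw_bound u2 u2x u2t y tau Mb2 Ht) as P2.
  pose proof K0 as HK. pose proof eps0 as He.
  pose proof (Rabs_pos (u1 y tau)). pose proof (Rabs_pos (u1x y tau)). pose proof (Rabs_pos (u1t y tau)).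
  pose proof (Rabs_pos (u2 y tau)). pose proof (Rabs_pos (u2x y tau)). pose proof (Rabs_pos (u2t y tau)).
  destruct rH1 as [_ [_ [_ [_ [_ [_ D]]]]]].
  set (v1 := u1 y tau) in *. set (v2 := u2 y tau) in *.
  assert (S1 : inS3 T K y tau v1) by (split; auto; lra).
  assert (S2 : inS3 T K y tau v2) by (split; auto; lra).
  destruct (DH y tau v2 S2) as [_ [Dt Du]].
  destruct (BH y tau v1 S1) as [Bu1 _].
  assert (Lt : Rabs (H1t y tau v2 - H1t y tau v1) <= K * Rabs (v2 - v1)).
  { apply (lip1 (fun v => H1t y tau v) (fun v => H1tu y tau v)). intros v _. apply (D y tau v Ht).
    intros v Hv. apply BH. split; auto. apply (betw_abs _ _ _ K Hv); lra. }
  assert (Lu : Rabs (H1u y tau v2 - H1u y tau v1) <= K * Rabs (v2 - v1)).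
  { apply (lip1 (fun v => H1u y tau v) (fun v => H1uu y tau v)). intros v _. apply (D y tau v Ht).
    intros v Hv. apply BH. split; auto. apply (betw_abs _ _ _ K Hv); lra. }
  match goal with |- Rabs (?A + ?B * ?p - (?C + ?D * ?q)) <= _ =>
    replace (A + B * p - (C + D * q)) with
      ((A - H1t y tau v2) + (H1t y tau v2 - C) + (B - H1u y tau v2) * p + (H1u y tau v2 - D) * p + D * (p - q)) by ring end.
  set (X1 := H2t y tau v2 - H1t y tau v2) in *. set (X2 := H1t y tau v2 - H1t y tau v1) in *.
  set (X3 := H2u y tau v2 - H1u y tau v2) in *. set (X4 := H1u y tau v2 - H1u y tau v1) in *.
  set (p := u2t y tau) in *. set (q := u1t y tau) in *.
  assert (T5 : forall a1 a2 a3 a4 a5, Rabs (a1 + a2 + a3 + a4 + a5) <= Rabs a1 + Rabs a2 + Rabs a3 + Rabs a4 + Rabs a5).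
  { intros. repeat (eapply Rle_trans; [apply Rabs_triang|]; apply Rplus_le_compat_r). lra. }
  eapply Rle_trans. apply T5. rewrite !Rabs_mult.
  assert (Hp : Rabs p <= K) by lra.
  pose proof (Rabs_pos X3). pose proof (Rabs_pos X4). pose proof (Rabs_pos (p - q)). pose proof (Rabs_pos (v2 - v1)).
  pose proof (Rabs_pos (u2x y tau - u1x y tau)).
  assert (A3 : Rabs X3 * Rabs p <= eps * K) by (apply Rmult_le_compat; auto; lra).
  assert (A4 : Rabs X4 * Rabs p <= K * Rabs (v2 - v1) * K) by (apply Rmult_le_compat; auto; nra).
  assert (A5 : Rabs (H1u y tau v1) * Rabs (p - q) <= K * Rabs (p - q)) by (apply Rmult_le_compat; auto; try lra; apply Rabs_pos).
  assert (Z1 : 0 <= K * K * Rabs (p - q)) by (apply Rmult_le_pos; nra).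
  assert (Z2 : 0 <= (K + K * K) * Rabs (u2x y tau - u1x y tau)) by (apply Rmult_le_pos; nra).
  assert (Z3 : K * Rabs (v2 - v1) * K = K * K * Rabs (v2 - v1)) by ring.
  lra.
Qed.

Let lam := lamf T K.
Lemma lam_pos : 0 < lam.
Proof. unfold lam, lamf. pose proof K0. nra. Qed.

Lemma abs3 (p q r : R) : Rabs (/ 2 * p + / 2 * q - / 2 * r) <= / 2 * Rabs p + / 2 * Rabs q + / 2 * Rabs r.
Proof.
  replace (/ 2 * p + / 2 * q - / 2 * r) with (/ 2 * (p + q + - r)) by ring.
  rewrite Rabs_mult, Rabs_right by lra.
  pose proof (Rabs_triang (p + q) (- r)). pose proof (Rabs_triang p q). rewrite Rabs_Ropp in H. lra.
Qed.

Lemma dht y tau : inT T tau -> deriv_within (inT T) (fun s => ht y s) tau (kt y tau).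
Proof. intros. unfold ht, kt. apply dh. auto. Qed.
Lemma ht0 y : ht y 0 = 0.
Proof. unfold ht. apply h0. Qed.

Section Core.
Variable N : R.
Hypothesis HN0 : 0 <= N.
Hypothesis HN : forall y tau, inT T tau -> m y tau <= N * exp (lam * tau).

Let Af := eps.
Let Bf := K * N.
Let Ah := (1 + K) * eps.
Let Bh := (K + K * K) * N.

Lemma HAf : 0 <= Af. Proof. apply eps0. Qed.
Lemma HBf : 0 <= Bf. Proof. pose proof K0. unfold Bf. nra. Qed.
Lemma HAh : 0 <= Ah. Proof. pose proof K0. pose proof eps0. unfold Ah. nra. Qed.
Lemma HBh : 0 <= Bh. Proof. pose proof K0. unfold Bh. assert (0 <= K + K * K) by nra. nra. Qed.

Lemma fb y tau : inT T tau -> Rabs (f y tau) <= phiE Af Bf lam tau.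
Proof.
  intros Ht. eapply Rle_trans. apply fbound; auto. unfold phiE, Af, Bf.
  pose proof (HN y tau Ht). pose proof K0. assert (K * m y tau <= K * (N * exp (lam * tau))) by (apply Rmult_le_compat_l; auto).
  lra.
Qed.

Lemma kb y tau : inT T tau -> Rabs (k y tau) <= phiE Ah Bh lam tau.
Proof.
  intros Ht. eapply Rle_trans. apply kbound; auto. unfold phiE, Ah, Bh.
  pose proof (HN y tau Ht). pose proof K0. assert (0 <= K + K * K) by nra.
  assert ((K + K * K) * m y tau <= (K + K * K) * (N * exp (lam * tau))) by (apply Rmult_le_compat_l; auto).
  lra.
Qed.

Lemma kbt y tau : inT T tau -> Rabs (kt y tau) <= phiE Ah Bh lam tau.
Proof. intros. unfold kt. apply kb. auto. Qed.

Let Lf := LpE Af Bf lam.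
Let Kh := LpE Ah Bh lam.

Lemma bw x t : inT T t -> Rabs (w x t) <= t * ((Lf t - Lf 0) + (Kh t - Kh 0)).
Proof.
  intros Ht. rewrite ID by auto.
  pose proof (W_bound T Af Bf lam f cf HAf HBf lam_pos fb x t Ht) as Q1.
  pose proof (P_bound T Ah Bh lam h k ch HAh HBh lam_pos h0 dh kb x t Ht) as Q2.
  pose proof (P_bound T Ah Bh lam ht kt cht HAh HBh lam_pos ht0 dht kbt (- x) t Ht) as Q3.
  replace (/ 2 * Wf f x t + / 2 * (Pf h x t - Pf ht (- x) t)) with (/ 2 * Wf f x t + / 2 * Pf h x t - / 2 * Pf ht (- x) t) by ring.
  eapply Rle_trans. apply abs3. fold Lf Kh in Q1, Q2, Q3. lra.
Qed.

Lemma Lq_nn t : 0 <= t -> 0 <= Lf t - Lf 0.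
Proof. intros. assert (Lf 0 <= Lf t). apply LpE_mono; auto. apply HAf. apply HBf. apply lam_pos. lra. Qed.
Lemma Kq_nn t : 0 <= t -> 0 <= Kh t - Kh 0.
Proof. intros. assert (Kh 0 <= Kh t). apply LpE_mono; auto. apply HAh. apply HBh. apply lam_pos. lra. Qed.

Lemma bwx x t : inT T t -> Rabs (wx x t) <= (Lf t - Lf 0) + 2 * (Kh t - Kh 0).
Proof.
  intros Ht. pose proof (Lq_nn t (proj1 Ht)). pose proof (Kq_nn t (proj1 Ht)).
  apply (limA (fun y => w y t) x (wx x t) (fun _ => (Lf t - Lf 0) + 2 * (Kh t - Kh 0))).
  - unfold w, wx, diff2. destruct C1 as [_ [_ [_ D1]]]. destruct C2 as [_ [_ [_ D2]]].
    apply (derivable_pt_lim_minus (fun y => u2 y t) (fun y => u1 y t)).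
    apply (D2 x t Ht). apply (D1 x t Ht).
  - destruct (Req_dec t 0) as [Ht0|Ht0].
    + exists 1. split. lra. intros eta Heta. subst t. rewrite !w0. rewrite Rminus_diag, Rabs_R0.
      apply Rmult_le_pos; lra.
    + exists t. split. unfold inT in Ht. lra. intros eta [He1 He2].
      rewrite !ID by auto.
      pose proof (W_shift T Af Bf lam f cf lam_pos fb x t eta Ht) as Q1.
      pose proof (P_x T Ah Bh lam h k ch HAh HBh lam_pos h0 dh kb x t eta He1 He2 (proj2 Ht)) as Q2.
      pose proof (P_x T Ah Bh lam ht kt cht HAh HBh lam_pos ht0 dht kbt (- x - eta) t eta He1 He2 (proj2 Ht)) as Q3.
      replace (- x - eta + eta) with (- x) in Q3 by ring.
      replace (- (x + eta)) with (- x - eta) by ring.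
      replace (/ 2 * Wf f (x + eta) t + / 2 * (Pf h (x + eta) t - Pf ht (- x - eta) t) -
        (/ 2 * Wf f x t + / 2 * (Pf h x t - Pf ht (- x) t)))
        with (/ 2 * (Wf f (x + eta) t - Wf f x t) + / 2 * (Pf h (x + eta) t - Pf h x t) - / 2 * (Pf ht (- x - eta) t - Pf ht (- x) t)) by ring.
      eapply Rle_trans. apply abs3. rewrite Rabs_minus_sym in Q3. rewrite (Rabs_right eta) in Q1 by lra.
      fold Lf Kh in Q1, Q2, Q3. lra.
  - apply continuity_pt_const. intros ? ?; reflexivity.
Qed.

Lemma bwt x t : inT T t -> Rabs (wt x t) <= (Lf t - Lf 0) + (Kh t - Kh 0).
Proof.
  intros Ht.
  set (gb := fun s => (Lf (t + s) - Lf 0) + s * phiE Af Bf lam (t + s) + (Kh (t + s) - Kh 0)).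
  assert (Hg0 : gb 0 = (Lf t - Lf 0) + (Kh t - Kh 0)) by (unfold gb; rewrite Rplus_0_r; ring).
  rewrite <- Hg0.
  assert (LfM : forall s1 s2, s1 <= s2 -> Lf s1 <= Lf s2).
  { intros. apply LpE_mono; auto. apply HAf. apply HBf. apply lam_pos. }
  assert (KhM : forall s1 s2, s1 <= s2 -> Kh s1 <= Kh s2).
  { intros. apply LpE_mono; auto. apply HAh. apply HBh. apply lam_pos. }
  assert (phM : forall s1 s2, s1 <= s2 -> phiE Af Bf lam s1 <= phiE Af Bf lam s2).
  { intros. apply phiE_mono; auto. apply HBf. apply lam_pos. }
  apply (limB T (fun s => w x s) t (wt x t) gb HT Ht).
  - unfold w, wt, diff2. destruct C1 as [_ [_ [_ D1]]]. destruct C2 as [_ [_ [_ D2]]].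
    apply (dw_minus (inT T) (fun s => u2 x s) (fun s => u1 x s)).
    apply (D2 x t Ht). apply (D1 x t Ht).
  - exists 1. split. lra. intros d Hd Hdl Hin.
    rewrite !ID by auto.
    replace (/ 2 * Wf f x (t + d) + / 2 * (Pf h x (t + d) - Pf ht (- x) (t + d)) -
        (/ 2 * Wf f x t + / 2 * (Pf h x t - Pf ht (- x) t)))
        with (/ 2 * (Wf f x (t + d) - Wf f x t) + / 2 * (Pf h x (t + d) - Pf h x t) - / 2 * (Pf ht (- x) (t + d) - Pf ht (- x) t)) by ring.
    eapply Rle_trans. apply abs3. unfold inT in Ht, Hin. unfold gb.
    destruct (Rle_dec 0 d) as [Hdp|Hdn].
    + assert (Hdp' : 0 < d) by (destruct Hdp; auto; subst; lra).
      rewrite (Rabs_right d) by lra.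
      pose proof (W_time T Af Bf lam f cf HAf HBf lam_pos fb x t d ltac:(lra) Hdp' ltac:(lra)) as Q1.
      pose proof (P_t T Ah Bh lam h k ch HAh HBh lam_pos h0 dh kb x t d ltac:(lra) Hdp' ltac:(lra)) as Q2.
      pose proof (P_t T Ah Bh lam ht kt cht HAh HBh lam_pos ht0 dht kbt (- x) t d ltac:(lra) Hdp' ltac:(lra)) as Q3.
      fold Lf Kh in Q1, Q2, Q3.
      assert (Lf t <= Lf (t + d)) by (apply LfM; lra).
      assert (d * (Lf t - Lf 0) <= d * (Lf (t + d) - Lf 0)) by (apply Rmult_le_compat_l; lra).
      lra.
    + set (s := - d). assert (Hs : 0 < s) by (unfold s; lra).
      replace (Rabs d) with s by (unfold s; rewrite Rabs_left; lra).
      replace d with (- s) in * by (unfold s; ring).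
      pose proof (W_time T Af Bf lam f cf HAf HBf lam_pos fb x (t + - s) s ltac:(lra) Hs ltac:(lra)) as Q1.
      pose proof (P_t T Ah Bh lam h k ch HAh HBh lam_pos h0 dh kb x (t + - s) s ltac:(lra) Hs ltac:(lra)) as Q2.
      pose proof (P_t T Ah Bh lam ht kt cht HAh HBh lam_pos ht0 dht kbt (- x) (t + - s) s ltac:(lra) Hs ltac:(lra)) as Q3.
      replace (t + - s + s) with t in Q1, Q2, Q3 by ring.
      fold Lf Kh in Q1, Q2, Q3.
      rewrite Rabs_minus_sym in Q1, Q2, Q3.
      assert (Lf (t + - s) <= Lf (t + s)) by (apply LfM; lra).
      assert (Kh t <= Kh (t + s)) by (apply KhM; lra).
      assert (phiE Af Bf lam t <= phiE Af Bf lam (t + s)) by (apply phM; lra).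
      assert (s * (Lf (t + - s) - Lf 0) <= s * (Lf (t + s) - Lf 0)) by (apply Rmult_le_compat_l; lra).
      assert (s * (Kh t - Kh 0) <= s * (Kh (t + s) - Kh 0)) by (apply Rmult_le_compat_l; lra).
      assert (2 * s * s * phiE Af Bf lam t <= 2 * s * s * phiE Af Bf lam (t + s)).
      { apply Rmult_le_compat_l; auto. nra. }
      lra.
  - unfold gb. apply continuity_pt_plus. apply continuity_pt_plus.
    + apply continuity_pt_minus. apply continuity_pt_comp with (f1 := fun s => t + s).
      apply continuity_pt_plus. apply continuity_pt_const. intros ? ?; reflexivity. apply continuity_pt_id.
      apply LpE_cont. apply continuity_pt_const. intros ? ?; reflexivity.
    + apply continuity_pt_mult. apply continuity_pt_id. apply continuity_pt_comp with (f1 := fun s => t + s).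
      apply continuity_pt_plus. apply continuity_pt_const. intros ? ?; reflexivity. apply continuity_pt_id.
      apply phiE_cont.
    + apply continuity_pt_minus. apply continuity_pt_comp with (f1 := fun s => t + s).
      apply continuity_pt_plus. apply continuity_pt_const. intros ? ?; reflexivity. apply continuity_pt_id.
      apply LpE_cont. apply continuity_pt_const. intros ? ?; reflexivity.
Qed.

Lemma core_pt x t : inT T t -> m x t / exp (lam * t) <= (T + 3) * (2 + K) * eps * T + N / 2.
Proof.
  intros Ht. pose proof (bw x t Ht) as B1. pose proof (bwx x t Ht) as B2. pose proof (bwt x t Ht) as B3.
  pose proof (Lq_nn t (proj1 Ht)). pose proof (Kq_nn t (proj1 Ht)).
  pose proof K0 as HK. pose proof eps0 as He. pose proof lam_pos as Hl.
  unfold inT in Ht.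
  set (E := exp (lam * t)).
  assert (HE : 1 <= E).
  { unfold E. rewrite <- exp_0. apply exp_mono. apply Rmult_le_pos; lra. }
  assert (HLq : Lf t - Lf 0 <= eps * T + K * N / lam * E).
  { unfold Lf, LpE, Af, Bf. fold E. rewrite !Rmult_0_r, exp_0.
    assert (0 <= K * N / lam) by (apply Rmult_le_pos; [nra| left; apply Rinv_0_lt_compat; lra]).
    assert (eps * t <= eps * T) by (apply Rmult_le_compat_l; lra). lra. }
  assert (HKq : Kh t - Kh 0 <= (1 + K) * eps * T + (K + K * K) * N / lam * E).
  { unfold Kh, LpE, Ah, Bh. fold E. rewrite !Rmult_0_r, exp_0.
    assert (0 <= (K + K * K) * N / lam) by (apply Rmult_le_pos; [nra| left; apply Rinv_0_lt_compat; lra]).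
    assert ((1 + K) * eps * t <= (1 + K) * eps * T) by (apply Rmult_le_compat_l; nra). lra. }
  set (Lq := Lf t - Lf 0) in *. set (Kq := Kh t - Kh 0) in *.
  assert (Hm : m x t <= (T + 3) * (Lq + Kq)).
  { unfold m. assert (t * (Lq + Kq) <= T * (Lq + Kq)) by (apply Rmult_le_compat_r; lra). lra. }
  set (R0 := (T + 3) * (2 * K + K * K)).
  assert (HR0 : 0 <= R0) by (unfold R0; nra).
  assert (Hm2 : m x t <= (T + 3) * (2 + K) * eps * T + R0 * (N / lam) * E).
  { eapply Rle_trans. exact Hm.
    replace ((T + 3) * (2 + K) * eps * T + R0 * (N / lam) * E) with
      ((T + 3) * ((eps * T + K * N / lam * E) + ((1 + K) * eps * T + (K + K * K) * N / lam * E))).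
    apply Rmult_le_compat_l; lra. unfold R0. field. lra. }
  assert (HEp : 0 < E) by lra.
  set (Q := (T + 3) * (2 + K) * eps * T).
  assert (HQ : 0 <= Q) by (unfold Q; apply Rmult_le_pos; [|lra]; apply Rmult_le_pos; [|lra]; nra).
  fold Q in Hm2.
  apply Rle_trans with ((Q + R0 * (N / lam) * E) / E).
  { unfold Rdiv. apply Rmult_le_compat_r. left; apply Rinv_0_lt_compat; lra. auto. }
  replace ((Q + R0 * (N / lam) * E) / E) with (Q / E + R0 * N / lam) by (field; lra).
  assert (Q / E <= Q).
  { unfold Rdiv. rewrite <- (Rmult_1_r Q) at 2. apply Rmult_le_compat_l; auto.
    rewrite <- Rinv_1. apply Rinv_le_contravar; lra. }
  assert (R0 * N / lam <= N / 2).
  { assert (2 * R0 <= lam) by (unfold R0, lam, lamf; lra).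
    apply Rmult_le_reg_r with lam; auto. unfold Rdiv.
    replace (R0 * N * / lam * lam) with (R0 * N) by (field; lra).
    assert (2 * R0 * N <= lam * N) by (apply Rmult_le_compat_r; auto). nra. }
  lra.
Qed.
End Core.

Lemma m_bound y tau : inT T tau -> 0 <= m y tau <= 2 * K.
Proof.
  intros Ht. pose proof (pw_bound u1 u1x u1t y tau Mb1 Ht). pose proof (pw_bound u2 u2x u2t y tau Mb2 Ht).
  unfold m, w, wx, wt, diff2.
  pose proof (Rabs_triang (u2 y tau) (- u1 y tau)). pose proof (Rabs_triang (u2x y tau) (- u1x y tau)).
  pose proof (Rabs_triang (u2t y tau) (- u1t y tau)). rewrite !Rabs_Ropp in *.
  pose proof (Rabs_pos (u2 y tau - u1 y tau)). pose proof (Rabs_pos (u2x y tau - u1x y tau)).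
  pose proof (Rabs_pos (u2t y tau - u1t y tau)). unfold Rminus in *. lra.
Qed.

Lemma final : M1 (diff2 u2 u1) (diff2 u2x u1x) (diff2 u2t u1t) T <= Cfun T K * T * eps.
Proof.
  pose proof K0 as HK. pose proof eps0 as He. pose proof lam_pos as Hl.
  set (S := fun r => exists y tau, inT T tau /\ r = m y tau / exp (lam * tau)).
  assert (Hdiv : forall y tau, inT T tau -> 0 <= m y tau / exp (lam * tau) <= m y tau).
  { intros y tau Ht. pose proof (m_bound y tau Ht). unfold inT in Ht.
    assert (1 <= exp (lam * tau)). { rewrite <- exp_0. apply exp_mono. apply Rmult_le_pos; lra. }
    split. apply Rmult_le_pos. lra. left. apply Rinv_0_lt_compat. lra.
    unfold Rdiv. rewrite <- (Rmult_1_r (m y tau)) at 2. apply Rmult_le_compat_l. lra.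
    rewrite <- Rinv_1. apply Rinv_le_contravar; lra. }
  destruct (completeness S) as [N [Hub Hlub]].
  { exists (2 * K). intros r [y [tau [Ht ->]]]. pose proof (Hdiv y tau Ht). pose proof (m_bound y tau Ht). lra. }
  { exists (m 0 0 / exp (lam * 0)). exists 0, 0. split; auto. unfold inT; lra. }
  assert (HN0 : 0 <= N).
  { eapply Rle_trans. apply (Hdiv 0 0). unfold inT; lra. apply Hub. exists 0, 0. split; auto. unfold inT; lra. }
  assert (HN : forall y tau, inT T tau -> m y tau <= N * exp (lam * tau)).
  { intros y tau Ht. assert (m y tau / exp (lam * tau) <= N) by (apply Hub; exists y, tau; auto).
    pose proof (exp_pos (lam * tau)).
    apply Rmult_le_reg_r with (/ exp (lam * tau)). apply Rinv_0_lt_compat; auto.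
    rewrite Rmult_assoc, Rinv_r by lra. rewrite Rmult_1_r. auto. }
  set (Q := (T + 3) * (2 + K) * eps * T).
  assert (HNQ : N <= 2 * Q).
  { assert (N <= Q + N / 2). apply Hlub. intros r [y [tau [Ht ->]]]. apply (core_pt N HN0 HN y tau Ht). lra. }
  set (EB := exp (lam * T)).
  assert (Hpt : forall y tau, inT T tau -> m y tau <= 2 * Q * EB).
  { intros y tau Ht. eapply Rle_trans. apply HN; auto. unfold EB. unfold inT in Ht.
    apply Rmult_le_compat; auto. left; apply exp_pos. apply exp_mono. apply Rmult_le_compat_l; lra. }
  assert (Bw : forall y tau, inT T tau -> Rabs (diff2 u2 u1 y tau) <= 2 * Q * EB).
  { intros y tau Hyt. pose proof (Hpt y tau Hyt) as Hm. unfold m in Hm. fold w. pose proof (Rabs_pos (wx y tau)). pose proof (Rabs_pos (wt y tau)). lra. }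
  assert (Bwx : forall y tau, inT T tau -> Rabs (diff2 u2x u1x y tau) <= 2 * Q * EB).
  { intros y tau Hyt. pose proof (Hpt y tau Hyt) as Hm. unfold m in Hm. fold wx. pose proof (Rabs_pos (w y tau)). pose proof (Rabs_pos (wt y tau)). lra. }
  assert (Bwt : forall y tau, inT T tau -> Rabs (diff2 u2t u1t y tau) <= 2 * Q * EB).
  { intros y tau Hyt. pose proof (Hpt y tau Hyt) as Hm. unfold m in Hm. fold wt. pose proof (Rabs_pos (wx y tau)). pose proof (Rabs_pos (w y tau)). lra. }
  unfold M1.
  pose proof (M0_le (diff2 u2 u1) T _ ltac:(lra) (ex_intro _ _ Bw) Bw).
  pose proof (M0_le (diff2 u2x u1x) T _ ltac:(lra) (ex_intro _ _ Bwx) Bwx).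
  pose proof (M0_le (diff2 u2t u1t) T _ ltac:(lra) (ex_intro _ _ Bwt) Bwt).
  assert (EC : Cfun T K * T * eps = 6 * Q * EB).
  { unfold Cfun, Q, EB, lam. rewrite Rmax_left by lra. rewrite (Rmax_left K 0) by lra. ring. }
  rewrite EC. lra.
Qed.
End MainSec.

Theorem mainTheorem18 :
  exists C : R -> R -> R,
    (forall T K, 0 < C T K) /\
    (forall T T' K K', T <= T' -> K <= K' -> C T K <= C T' K') /\
    forall (T K eps : R)
      (F1 F1u F1p F1q F2 F2u F2p F2q : R -> R -> R -> R -> R -> R)
      (H1 H1t H1u H1tu H1uu H2 H2t H2u H2tu H2uu : R -> R -> R -> R)
      (a b : R -> R)
      (u1 u1x u1t u2 u2x u2t : R -> R -> R),
    0 < T ->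
    regF T F1 F1u F1p F1q -> regF T F2 F2u F2p F2q ->
    regH T H1 H1t H1u H1tu H1uu -> regH T H2 H2t H2u H2tu H2uu ->
    continuity a -> continuity b ->
    isC1 T u1 u1x u1t -> isC1 T u2 u2x u2t ->
    (forall x t, inT T t -> u1 x t = Iop a b (Fop F1 u1 u1x u1t) (Hop H1 u1) x t) ->
    (forall x t, inT T t -> u2 x t = Iop a b (Fop F2 u2 u2x u2t) (Hop H2 u2) x t) ->
    M1_le u1 u1x u1t T K -> M1_le u2 u2x u2t T K ->
    (forall x u, H1 x 0 u = H2 x 0 u) ->
    (forall x t u p q, inS5 T K x t u p q ->
       Rabs (F1u x t u p q) <= K /\ Rabs (F1p x t u p q) <= K /\ Rabs (F1q x t u p q) <= K) ->
    (forall x t u, inS3 T K x t u ->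
       Rabs (H1u x t u) <= K /\ Rabs (H1tu x t u) <= K /\ Rabs (H1uu x t u) <= K) ->
    (forall x t u p q, inS5 T K x t u p q -> Rabs (F2 x t u p q - F1 x t u p q) <= eps) ->
    (forall x t u, inS3 T K x t u ->
       Rabs (H2 x t u - H1 x t u) <= eps /\ Rabs (H2t x t u - H1t x t u) <= eps /\
       Rabs (H2u x t u - H1u x t u) <= eps) ->
    M1 (diff2 u2 u1) (diff2 u2x u1x) (diff2 u2t u1t) T <= C T K * T * eps.
Proof.
  exists Cfun. split. apply Cfun_pos. split. intros; apply Cfun_mono; auto.
  intros T K eps F1 F1u F1p F1q F2 F2u F2p F2q H1 H1t H1u H1tu H1uu H2 H2t H2u H2tu H2uu a b
    u1 u1x u1t u2 u2x u2t HT rF1 rF2 rH1 rH2 ca cb C1 C2 E1 E2 Mb1 Mb2 H0 BF BH DF DH.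
  exact (final T K eps F1 F1u F1p F1q F2 F2u F2p F2q H1 H1t H1u H1tu H1uu H2 H2t H2u H2tu H2uu a b
    u1 u1x u1t u2 u2x u2t HT rF1 rF2 rH1 rH2 C1 C2 E1 E2 Mb1 Mb2 H0 BF BH DF DH).
Qed.
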